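(* Let $X$ have a pdf $f$ satisfying Conditions (A) and (B) below, and fix the zero-wait sampler. For $\delta>0$ let $D_\delta=D(Q_{\mathrm{uni}}^\delta)$. Then the uniform quantizer is asymptotically optimal: $$\lim_{\delta\to0}\Big[\mathrm{AoI}(S_{\mathrm z},Q_{\mathrm{uni}}^\delta,F^* )-\inf_{Q:\,D(Q)\le D_\delta}\mathrm{AoI}(S_{\mathrm z},Q,F^* )\Big]=0.$$
   Context: Let $X$ be a real random variable with pdf $f$. Condition (A): $f$ is continuous and differentiable, and its support is a bounded interval $I$. Condition (B): $\int_I f\log_2^2 f\,dx$ and $-\int_I f\log_2 f\,dx$ exist and are finite. Quantizers. A quantizer $Q$ partitions $I$ into intervals $[a_{i-1},a_i]$ with representation points $c_i$. Write $p_i=P(X\in[a_{i-1},a_i])$. The mean-squared distortion is $D(Q)=\sum_i\int_{a_{i-1}}^{a_i}(x-c_i)^2f(x)\,dx$. The uniform quantizer $Q_{\mathrm{uni}}^\delta$ partitions $I$ into consecutive cells of length $\delta$, with midpoint representation points. Codes. A real-valued code assigns lengths $l_i\in\mathbb R^+$ to the cells, subject to $\sum_i2^{-l_i}\le1$. The random codeword length is $L=l_i$ when $X$ is in cell $i$. Objective. Under the zero-wait sampler $S_{\mathrm z}$, the AoI is $\mathrm{AoI}(S_{\mathrm z},Q,l)=\frac{E[L^2]}{2E[L]}+E[L]$. We write $\mathrm{AoI}(S_{\mathrm z},Q,F^* )=\inf_l \mathrm{AoI}(S_{\mathrm z},Q,l)$, the infimum over real-valued codes for $Q$. *)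

(* Defs.v *)
From Stdlib Require Import Reals ZArith.
From Coquelicot Require Import Coquelicot.
Open Scope R_scope.

Fixpoint rsum (n : nat) (g : nat -> R) : R :=
  match n with O => 0 | S m => rsum m g + g m end.

Definition log2 (x : R) : R := ln x / ln 2.

Definition in_support (f : R -> R) (x : R) : Prop :=
  forall eps : R, 0 < eps -> exists y, Rabs (y - x) < eps /\ f y <> 0.

Definition pdf_on (f : R -> R) (a b : R) : Prop :=
  a < b /\ (forall x, 0 <= f x) /\
  (forall x, in_support f x <-> a <= x <= b) /\
  ex_RInt f a b /\ RInt f a b = 1.

Definition condA (f : R -> R) (a b : R) : Prop :=
  (forall x, a <= x <= b ->
     filterlim f (within (fun y => a <= y <= b) (locally x)) (locally (f x))) /\
  (forall x, a < x < b -> ex_derive f x).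

(* Condition (B): the integrals of f log2^2 f and - f log2 f over I exist and are
   finite (convention: Stdlib ln 0 = 0, so 0 log 0 = 0). *)
Definition condB (f : R -> R) (a b : R) : Prop :=
  ex_RInt (fun x => f x * (log2 (f x)) ^ 2) a b /\
  ex_RInt (fun x => - (f x * log2 (f x))) a b.

(* A quantizer with qn cells: cell i (i < qn) is [qa i, qa (i+1)],
   with representation point qc i. *)
Record quantizer := Quantizer { qn : nat; qa : nat -> R; qc : nat -> R }.

Definition is_quantizer (a b : R) (Q : quantizer) : Prop :=
  (1 <= qn Q)%nat /\ qa Q 0 = a /\ qa Q (qn Q) = b /\
  (forall i, (i < qn Q)%nat -> qa Q i < qa Q (S i)).

Definition cellp (f : R -> R) (Q : quantizer) (i : nat) : R :=
  RInt f (qa Q i) (qa Q (S i)).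

Definition distortion (f : R -> R) (Q : quantizer) : R :=
  rsum (qn Q) (fun i => RInt (fun x => (x - qc Q i) ^ 2 * f x) (qa Q i) (qa Q (S i))).

(* real-valued code: positive lengths satisfying Kraft's inequality *)
Definition is_code (Q : quantizer) (l : nat -> R) : Prop :=
  (forall i, (i < qn Q)%nat -> 0 < l i) /\
  rsum (qn Q) (fun i => Rpower 2 (- l i)) <= 1.

Definition EL (f : R -> R) (Q : quantizer) (l : nat -> R) : R :=
  rsum (qn Q) (fun i => cellp f Q i * l i).
Definition EL2 (f : R -> R) (Q : quantizer) (l : nat -> R) : R :=
  rsum (qn Q) (fun i => cellp f Q i * l i ^ 2).

Definition AoI_zw (f : R -> R) (Q : quantizer) (l : nat -> R) : R :=
  EL2 f Q l / (2 * EL f Q l) + EL f Q l.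

(* AoI(S_z, Q, F^* ) : infimum over real-valued codes *)
Definition AoI_opt (f : R -> R) (Q : quantizer) : R :=
  real (Glb_Rbar (fun y => exists l, is_code Q l /\ y = AoI_zw f Q l)).

Definition AoI_best (f : R -> R) (a b D : R) : R :=
  real (Glb_Rbar (fun y => exists Q, is_quantizer a b Q /\ distortion f Q <= D /\
                                    y = AoI_opt f Q)).

(* ceiling *)
Definition ceil_nat (x : R) : nat := Z.to_nat (1 - up (- x)).

Definition uni_quantizer (a b delta : R) : quantizer :=
  let bp := fun i : nat => Rmin (a + INR i * delta) b in
  Quantizer (ceil_nat ((b - a) / delta)) bp (fun i => (bp i + bp (S i)) / 2).

(* Main.v *)
Require Import Defs.
From Stdlib Require Import Reals Lra Lia ZArith.
From Coquelicot Require Import Coquelicot.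
Open Scope R_scope.


Lemma rsum_ext n g h : (forall i, (i < n)%nat -> g i = h i) -> rsum n g = rsum n h.
Proof. induction n; simpl; intros H; auto. rewrite IHn by (intros; apply H; lia). rewrite H by lia. auto. Qed.

Lemma rsum_plus n g h : rsum n (fun i => g i + h i) = rsum n g + rsum n h.
Proof. induction n; simpl; [lra|]. rewrite IHn; lra. Qed.

Lemma rsum_minus n g h : rsum n (fun i => g i - h i) = rsum n g - rsum n h.
Proof. induction n; simpl; [lra|]. rewrite IHn; lra. Qed.

Lemma rsum_scal n c g : rsum n (fun i => c * g i) = c * rsum n g.
Proof. induction n; simpl; [lra|]. rewrite IHn; lra. Qed.

Lemma rsum_const n c : rsum n (fun _ => c) = INR n * c.
Proof. induction n; simpl rsum; [simpl; lra|]. rewrite IHn, S_INR; lra. Qed.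

Lemma rsum_le n g h : (forall i, (i < n)%nat -> g i <= h i) -> rsum n g <= rsum n h.
Proof. induction n; simpl; intros H; [lra|]. assert (g n <= h n) by (apply H; lia).
 assert (rsum n g <= rsum n h) by (apply IHn; intros; apply H; lia). lra. Qed.

Lemma rsum_nonneg n g : (forall i, (i < n)%nat -> 0 <= g i) -> 0 <= rsum n g.
Proof. intros H. replace 0 with (rsum n (fun _ => 0)). apply rsum_le; auto.
 rewrite rsum_const; lra. Qed.

Lemma rsum_term_le n g j : (forall i, (i < n)%nat -> 0 <= g i) -> (j < n)%nat -> g j <= rsum n g.
Proof. induction n; simpl; intros H Hj; [lia|].
 assert (0 <= g n) by (apply H; lia).
 destruct (Nat.eq_dec j n). subst. assert (0 <= rsum n g) by (apply rsum_nonneg; intros; apply H; lia). lra.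
 assert (g j <= rsum n g) by (apply IHn; [intros; apply H; lia|lia]). lra. Qed.

Lemma rsum_telescope n (x : nat -> R) : rsum n (fun i => x (S i) - x i) = x n - x O.
Proof. induction n; simpl; [lra|]. rewrite IHn; lra. Qed.

Lemma ln_le_sub1 z : 0 < z -> ln z <= z - 1.
Proof. intros Hz. pose proof (exp_ineq1_le (ln z)). rewrite exp_ln in H by auto. lra. Qed.

Lemma ln2_pos : 0 < ln 2.
Proof. pose proof ln_lt_2. lra. Qed.

Lemma ln_0 : ln 0 = 0.
Proof. unfold ln. destruct (Rlt_dec 0 0) as [r|r]; [exfalso; lra|auto]. Qed.

Lemma ln_nonpos_arg x : x <= 0 -> ln x = 0.
Proof. intros. unfold ln. destruct (Rlt_dec 0 x) as [r|r]; [exfalso; lra|auto]. Qed.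

Lemma ln_inv_le_sqrt y : 0 < y -> - ln y <= 2 / sqrt y.
Proof. intros Hy. pose proof (sqrt_lt_R0 y Hy) as Hs.
 assert (ln y = 2 * ln (sqrt y)).
 { pattern y at 1; rewrite <- (sqrt_sqrt y) by lra. rewrite ln_mult by auto. lra. }
 pose proof (ln_le_sub1 (/ sqrt y) (Rinv_0_lt_compat _ Hs)).
 rewrite ln_Rinv in H0 by auto. rewrite H. unfold Rdiv. lra. Qed.

Lemma xlnx_upper y : 0 <= y -> - (y * ln y) <= 2 * sqrt y.
Proof. intros Hy. destruct (Req_dec y 0). subst. rewrite ln_0, sqrt_0; lra.
 assert (0 < y) by lra. pose proof (sqrt_lt_R0 y H0).
 pose proof (ln_inv_le_sqrt y H0).
 replace (2 * sqrt y) with (y * (2 / sqrt y)).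
 2:{ rewrite <- (sqrt_sqrt y) at 1 by lra. field. lra. }
 replace (- (y * ln y)) with (y * (- ln y)) by ring. apply Rmult_le_compat_l; lra. Qed.

Lemma xlnx_upper2 y : 0 <= y -> - (y * ln y) <= 2.
Proof. intros Hy. destruct (Rle_dec y 1).
 pose proof (xlnx_upper y Hy). assert (sqrt y <= 1). { rewrite <- sqrt_1. apply sqrt_le_1_alt; lra. } lra.
 assert (0 < ln y). { rewrite <- ln_1. apply ln_increasing; lra. } nra. Qed.

Lemma xlnx_lower y M : 0 <= y <= M -> - (M * M) <= - (y * ln y).
Proof. intros [H1 H2]. destruct (Req_dec y 0). subst. rewrite ln_0. nra.
 pose proof (ln_le_sub1 y ltac:(lra)). destruct (Rle_dec 1 y).
 assert (0 <= ln y). { rewrite <- ln_1. apply Rcomplements.ln_le; lra. } nra.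
 assert (ln y <= 0). { rewrite <- ln_1. apply Rcomplements.ln_le; lra. } nra. Qed.

Lemma xln2x_upper y M : 0 <= y <= M -> y * (ln y)^2 <= 4 + M^3.
Proof. intros [H1 H2]. destruct (Req_dec y 0). subst. rewrite ln_0. assert (0 <= M^3) by (apply pow_le; lra). simpl; lra.
 assert (0 < y) by lra. destruct (Rle_dec y 1).
 - pose proof (ln_inv_le_sqrt y H0). pose proof (sqrt_lt_R0 y H0).
   assert (ln y <= 0). { rewrite <- ln_1. apply Rcomplements.ln_le; lra. }
   assert (0 <= M^3) by (apply pow_le; lra).
   assert ((ln y)^2 <= (2 / sqrt y)^2). { replace ((ln y)^2) with ((- ln y)^2) by ring. apply pow_incr. lra. }
   assert (y * (2/sqrt y)^2 = 4). { rewrite <- (sqrt_sqrt y) at 1 by lra. field. lra. }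
   assert (y * (ln y)^2 <= y * (2/sqrt y)^2) by (apply Rmult_le_compat_l; lra). lra.
 - assert (0 <= ln y). { rewrite <- ln_1. apply Rcomplements.ln_le; lra. }
   pose proof (ln_le_sub1 y H0). assert (ln y <= M) by lra.
   assert (y * (ln y)^2 <= M * M^2). { apply Rmult_le_compat; try lra. apply pow_le; lra. apply pow_incr; lra. }
   simpl in *; nra. Qed.

Definition phi (y : R) : R := - (y * ln y).

Lemma phi_cont y : continuous phi y.
Proof.
 apply continuity_pt_filterlim.
 destruct (Rlt_dec 0 y) as [Hp|Hn].
 - unfold phi. apply continuity_pt_opp. apply continuity_pt_mult. apply continuity_pt_id.
   apply derivable_continuous_pt. exists (/ y). apply derivable_pt_lim_ln; auto.
 - destruct (Rlt_dec y 0) as [Hneg|Hz].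
   + (* locally zero *)
     intros eps Heps. exists (- y). split; [lra|]. intros x [_ Hx].
     simpl in *. unfold R_dist in *. apply Rabs_def2 in Hx.
     unfold phi. rewrite (ln_nonpos_arg y) by lra. rewrite (ln_nonpos_arg x) by lra.
     replace (- (x * 0) - - (y * 0)) with 0 by ring; rewrite Rabs_R0; lra.
   + assert (y = 0) by lra. subst y.
     intros eps Heps. exists (Rmin 1 (eps * eps / 4)). split.
     { apply Rmin_pos; [lra|]. nra. }
     intros x [_ Hx]. simpl in *. unfold R_dist, phi in *. rewrite ln_0.
     replace (- (x * ln x) - - (0 * 0)) with (- (x * ln x)) by ring.
     rewrite Rminus_0_r in Hx.
     destruct (Rle_dec x 0). rewrite ln_nonpos_arg by lra. rewrite Rmult_0_r, Ropp_0, Rabs_R0; lra.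
     assert (Hx0 : 0 < x) by lra. rewrite Rabs_right in Hx by lra.
     assert (x < eps * eps / 4) by (eapply Rlt_le_trans; [apply Hx| apply Rmin_r]).
     assert (x < 1) by (eapply Rlt_le_trans; [apply Hx| apply Rmin_l]).
     assert (ln x < 0). { rewrite <- ln_1. apply ln_increasing; lra. }
     rewrite Rabs_right by nra.
     pose proof (xlnx_upper x ltac:(lra)).
     assert (sqrt x < eps / 2).
     { rewrite <- (sqrt_Rsqr (eps/2)) by lra. apply sqrt_lt_1_alt. split; [lra|]. unfold Rsqr. lra. }
     lra.
Qed.

Ltac toR := match goal with |- ?x = ?y => change (@eq R x y) end.

Definition I (h : R -> R) (u v : R) : R := RInt h u v.

Definition cont (h : R -> R) := forall x, continuity_pt h x.

Lemma exR h u v : cont h -> ex_RInt h u v.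
Proof. intros H. apply (ex_RInt_continuous (V:=R_CompleteNormedModule)). intros z _. apply continuity_pt_filterlim, H. Qed.

Lemma RInt_part h n (x : nat -> R) : cont h ->
  rsum n (fun i => I h (x i) (x (S i))) = I h (x O) (x n).
Proof. unfold I. intros H. induction n; simpl.
 - rewrite RInt_point. reflexivity.
 - rewrite IHn. pose proof (RInt_Chasles h (x O) (x n) (x (S n)) (exR h _ _ H) (exR h _ _ H)).
   exact H0. Qed.

Lemma RInt_le' h k u v : u <= v -> cont h -> cont k -> (forall x, u <= x <= v -> h x <= k x) ->
  I h u v <= I k u v.
Proof. unfold I. intros. apply RInt_le; auto using exR. intros; apply H2; lra. Qed.

Lemma RInt_plus' h k u v : cont h -> cont k -> I (fun x => h x + k x) u v = I h u v + I k u v.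
Proof. unfold I. intros. apply (RInt_plus h k u v); auto using exR. Qed.

Lemma RInt_minus' h k u v : cont h -> cont k -> I (fun x => h x - k x) u v = I h u v - I k u v.
Proof. unfold I. intros. apply (RInt_minus h k u v); auto using exR. Qed.

Lemma RInt_scal' h c u v : cont h -> I (fun x => c * h x) u v = c * I h u v.
Proof. unfold I. intros. apply (RInt_scal h u v c); auto using exR. Qed.

Lemma RInt_const' c u v : I (fun _ => c) u v = (v - u) * c.
Proof. unfold I. rewrite RInt_const. try (unfold scal; simpl; unfold mult; simpl; ring). Qed.

Lemma RInt_ge0 h u v : u <= v -> cont h -> (forall x, u <= x <= v -> 0 <= h x) -> 0 <= I h u v.
Proof. unfold I. intros. assert (E: RInt (fun _ => 0) u v = 0) by (rewrite RInt_const'; apply Rmult_0_r).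
 rewrite <- E. apply RInt_le'; auto.
 intros x; apply continuity_pt_const; intros ??; auto. Qed.

Lemma cont_const c : cont (fun _ => c).
Proof. intros x; apply continuity_pt_const; intros ??; auto. Qed.
Lemma cont_id : cont (fun x => x).
Proof. intros x; apply continuity_pt_id. Qed.
Lemma cont_plus h k : cont h -> cont k -> cont (fun x => h x + k x).
Proof. intros H K x; apply continuity_pt_plus; auto. Qed.
Lemma cont_minus h k : cont h -> cont k -> cont (fun x => h x - k x).
Proof. intros H K x; apply continuity_pt_minus; auto. Qed.
Lemma cont_mult h k : cont h -> cont k -> cont (fun x => h x * k x).
Proof. intros H K x; apply continuity_pt_mult; auto. Qed.
Lemma cont_sq c : cont (fun x => (x - c)^2).
Proof. intros x. simpl. apply continuity_pt_mult. apply continuity_pt_minus. apply continuity_pt_id. apply continuity_pt_const; intros ??; auto.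
 apply continuity_pt_mult. apply continuity_pt_minus. apply continuity_pt_id. apply continuity_pt_const; intros ??; auto. apply continuity_pt_const; intros ??; auto. Qed.
Lemma cont_phi h : cont h -> cont (fun x => phi (h x)).
Proof. intros H x. change (continuity_pt (comp phi h) x). apply continuity_pt_comp; auto. apply (proj2 (continuity_pt_filterlim _ _)), phi_cont. Qed.

Lemma cont_cauchy c s : 0 < s -> cont (fun x => / (1 + ((x - c) / s)^2)).
Proof. intros Hs x. apply continuity_pt_inv.
 apply continuity_pt_plus. apply continuity_pt_const; intros ??; auto.
 simpl. apply continuity_pt_mult. unfold Rdiv. apply continuity_pt_mult. apply continuity_pt_minus. apply continuity_pt_id. apply continuity_pt_const; intros ??; auto. apply continuity_pt_const; intros ??; auto.
 apply continuity_pt_mult. unfold Rdiv. apply continuity_pt_mult. apply continuity_pt_minus. apply continuity_pt_id. apply continuity_pt_const; intros ??; auto. apply continuity_pt_const; intros ??; auto.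
 apply continuity_pt_const; intros ??; auto.
 assert (0 <= ((x - c) / s)^2) by (apply pow2_ge_0). lra. Qed.

Lemma derive_cauchy s c x : 0 < s -> is_derive (fun x => s * atan ((x - c)/s)) x (/ (1 + ((x - c) / s)^2)).
Proof. intros.
assert (H1: is_derive (fun x => (x-c)/s) x (/s)). { auto_derive; [auto| field; lra]. }
pose proof (is_derive_comp atan _ x _ _ (is_derive_atan _) H1) as H2.
pose proof (is_derive_scal _ x s _ H2) as H3.
simpl in H3. unfold scal, mult in H3; simpl in H3. unfold mult in H3; simpl in H3.
replace (/ (1 + ((x - c) / s)^2)) with (s * (/ s * / (1 + ((x - c) / s)²))). exact H3.
unfold Rsqr. simpl. field. split. lra. pose proof (Rle_0_sqr (x-c)). unfold Rsqr in *. nra.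
Qed.

Lemma RInt_cauchy c s u v : 0 < s ->
  I (fun x => / (1 + ((x - c) / s)^2)) u v = s * (atan ((v - c)/s) - atan ((u - c)/s)).
Proof. unfold I. intros Hs. apply is_RInt_unique.
 replace (s * (atan ((v - c)/s) - atan ((u - c)/s))) with
   (minus ((fun x => s * atan ((x - c)/s)) v) ((fun x => s * atan ((x - c)/s)) u)).
 2:{ unfold minus, plus, opp; simpl. ring. }
 apply (is_RInt_derive (fun x => s * atan ((x - c)/s))).
 - intros x _. apply derive_cauchy; auto.
 - intros x _. apply continuity_pt_filterlim. apply cont_cauchy; auto.
Qed.

Lemma RInt_cauchy_le c s u v : 0 < s -> I (fun x => / (1 + ((x - c) / s)^2)) u v <= s * PI.
Proof. unfold I. intros Hs. rewrite RInt_cauchy by auto. pose proof (atan_bound ((v-c)/s)). pose proof (atan_bound ((u-c)/s)).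
 apply Rmult_le_compat_l; lra. Qed.

Lemma RInt_sq m u v : I (fun x => (x - m)^2) u v = ((v - m)^3 - (u - m)^3) / 3.
Proof. unfold I. apply is_RInt_unique.
 replace (((v - m)^3 - (u - m)^3) / 3) with
   (minus ((fun x => (x - m)^3/3) v) ((fun x => (x - m)^3/3) u)).
 2:{ unfold minus, plus, opp; simpl. field. }
 apply (is_RInt_derive (fun x => (x - m)^3/3)).
 - intros x _. auto_derive; auto. field.
 - intros x _. apply continuity_pt_filterlim. apply cont_sq.
Qed.

Lemma sq_int_lower c u v : u <= v -> (v - u)^3 / 12 <= I (fun x => (x - c)^2) u v.
Proof. unfold I. intros. rewrite RInt_sq.
 assert (E: 4 * ((v - c)^3 - (u - c)^3) - (v - u)^3 = (v - u) * (3 * ((v - c) + (u - c))^2)) by ring.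
 assert (0 <= (v - u) * (3 * ((v - c) + (u - c))^2)).
 { apply Rmult_le_pos; [lra|]. pose proof (pow2_ge_0 ((v - c) + (u - c))). lra. }
 lra. Qed.

Lemma sq_int_mid u v : I (fun x => (x - (u + v)/2)^2) u v = (v - u)^3 / 12.
Proof. unfold I. rewrite RInt_sq. toR. field. Qed.

Definition good (g : R -> R) (a b : R) : Prop :=
  a < b /\ cont g /\ (forall x, 0 <= g x) /\ I g a b = 1 /\
  (forall u v, a <= u -> u < v -> v <= b -> 0 < I g u v).

Lemma gibbs_pt y q : 0 <= y -> 0 < q -> - (y * ln y) <= - y * ln q + q - y.
Proof. intros Hy Hq. destruct (Req_dec y 0). subst. rewrite ln_0. lra.
 assert (0 < y) by lra. pose proof (ln_le_sub1 (q / y) ltac:(apply Rdiv_lt_0_compat; lra)).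
 unfold Rdiv in H1. rewrite ln_mult in H1 by (try apply Rinv_0_lt_compat; lra). rewrite ln_Rinv in H1 by lra.
 assert (y * (ln q - ln y) <= y * (q * / y - 1)) by (apply Rmult_le_compat_l; lra).
 replace (y * (q * / y - 1)) with (q - y) in H2 by (field; lra). nra. Qed.

Lemma cont_sqg c g : cont g -> cont (fun x => (x - c)^2 * g x).
Proof. intros; apply cont_mult; auto using cont_sq. Qed.

Lemma gibbs_cell g c s u v : cont g -> (forall x, 0 <= g x) -> 0 < s -> u <= v ->
  0 < I g u v ->
  I (fun x => phi (g x)) u v <=
  - (I g u v * ln (I g u v)) + I g u v * ln (PI * s)
  + I (fun x => (x - c)^2 * g x) u v / s^2.
Proof. intros Hc Hg Hs Huv Hp. set (p := I g u v) in *. set (d := I (fun x => (x - c)^2 * g x) u v).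
 assert (HPI : 0 < PI) by apply PI_RGT_0.
 set (Kp := - ln p + ln (PI * s)).
 set (cau := fun x => / (1 + ((x - c) / s)^2)).
 assert (Hcau : cont cau) by (apply cont_cauchy; auto).
 assert (Hcaup : forall x, 0 < cau x).
 { intros x. unfold cau. apply Rinv_0_lt_compat. pose proof (pow2_ge_0 ((x-c)/s)). lra. }
 assert (Hpt : forall x, phi (g x) <= Kp * g x + / s^2 * ((x - c)^2 * g x) + p / (PI * s) * cau x - g x).
 { intros x. unfold phi. pose proof (gibbs_pt (g x) (p / (PI * s) * cau x) (Hg x)) as G.
   assert (0 < p / (PI * s) * cau x). { apply Rmult_lt_0_compat; auto. apply Rdiv_lt_0_compat; nra. }
   specialize (G H).
   assert (Eln : ln (p / (PI * s) * cau x) = ln p - ln (PI * s) - ln (1 + ((x - c)/s)^2)).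
   { unfold Rdiv, cau. pose proof (pow2_ge_0 ((x-c)/s)).
     assert (P1: 0 < PI * s) by nra. assert (P2 : 0 < 1 + ((x - c) * / s)^2) by (unfold Rdiv in H0; lra).
     pose proof (Rinv_0_lt_compat _ P1). pose proof (Rinv_0_lt_compat _ P2).
     rewrite ln_mult by (try apply Rmult_lt_0_compat; auto).
     rewrite ln_mult by auto.
     rewrite !ln_Rinv by auto. unfold Rdiv; ring. }
   rewrite Eln in G.
   assert (L1 : ln (1 + ((x - c)/s)^2) <= ((x - c)/s)^2).
   { pose proof (pow2_ge_0 ((x-c)/s)). pose proof (ln_le_sub1 (1 + ((x - c)/s)^2) ltac:(lra)). lra. }
   assert (E2 : ((x - c)/s)^2 = / s^2 * (x - c)^2) by (field; lra).
   pose proof (Hg x).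
   assert (g x * ln (1 + ((x - c)/s)^2) <= g x * (/ s^2 * (x - c)^2)) by (rewrite <- E2; apply Rmult_le_compat_l; lra).
   unfold Kp. nra. }
 assert (Hc1 : cont (fun x => Kp * g x + / s^2 * ((x - c)^2 * g x))).
 { apply cont_plus; apply cont_mult; auto using cont_const, cont_sqg. }
 assert (Hc2 : cont (fun x => Kp * g x + / s^2 * ((x - c)^2 * g x) + p / (PI * s) * cau x)).
 { apply cont_plus; auto. apply cont_mult; auto using cont_const. }
 eapply Rle_trans. apply RInt_le'; [auto| apply cont_phi; auto | | intros x _; apply Hpt].
 { apply cont_minus; auto. }
 rewrite RInt_minus' by auto. rewrite RInt_plus' by (auto; apply cont_mult; auto using cont_const).
 rewrite RInt_plus' by (apply cont_mult; auto using cont_const, cont_sqg).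
 rewrite !RInt_scal' by auto using cont_sqg.
 fold p d.
 pose proof (RInt_cauchy_le c s u v Hs). fold cau in H.
 assert (p / (PI * s) * I cau u v <= p).
 { replace p with (p / (PI * s) * (s * PI)) at 2 by (field; nra). apply Rmult_le_compat_l; auto.
   apply Rlt_le, Rdiv_lt_0_compat; nra. }
 unfold Kp. unfold Rdiv at 2. nra.
Qed.

Lemma bracket lam D rho : 0 < lam -> 0 < D -> 0 < rho ->
  (/2 * ln (lam/6) + /2) + ln D - lam * D^2 / (12 * rho) <= /2 * ln rho.
Proof. intros. set (z := lam / 6 * (D * D) * / rho).
 assert (Hz : 0 < z). { unfold z. apply Rmult_lt_0_compat; [|apply Rinv_0_lt_compat; auto]. apply Rmult_lt_0_compat; nra. }
 pose proof (ln_le_sub1 z Hz).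
 assert (ln z = ln (lam/6) + 2 * ln D - ln rho).
 { unfold z. rewrite ln_mult, ln_mult, ln_mult, ln_Rinv; try lra; try nra; try apply Rinv_0_lt_compat; auto; try apply Rdiv_lt_0_compat; try lra.
   apply Rmult_lt_0_compat; [apply Rdiv_lt_0_compat; lra|nra]. }
 assert (z = lam * D^2 / (6 * rho)) by (unfold z; field; lra).
 assert (lam * D ^ 2 / (12 * rho) = z / 2) by (rewrite H4; field; lra).
 lra. Qed.

Lemma nice_cell g c u v lam m w : cont g -> (forall x, 0 <= g x) -> u < v -> 0 < m -> 0 < lam -> 0 <= w ->
  (forall x, u <= x <= v -> m <= g x <= m + 2 * w) ->
  I (fun x => phi (g x)) u v + (/2 * ln (lam/6) + /2) * I g u v
  + I g u v * ln (I g u v) - lam * I (fun x => (x - c)^2 * g x) u v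
  <= 3/2 * ln ((m + 2 * w) / m) * I g u v.
Proof. intros Hc Hg Huv Hm Hl Hw Hb.
 set (p := I g u v). set (d := I (fun x => (x - c)^2 * g x) u v). set (D := v - u).
 set (rho := (m + 2 * w) / m).
 assert (Hrho : 0 < rho) by (unfold rho; apply Rdiv_lt_0_compat; lra).
 assert (HD : 0 < D) by (unfold D; lra).
 assert (Hp1 : m * D <= p).
 { unfold p, D. replace (m * (v - u)) with (I (fun _ => m) u v) by (rewrite RInt_const'; toR; ring).
   apply RInt_le'; auto using cont_const. lra. intros; apply Hb; auto. }
 assert (Hp2 : p <= rho * m * D).
 { unfold p, D. replace (rho * m * (v - u)) with (I (fun _ => m + 2 * w) u v).
   apply RInt_le'; auto using cont_const. lra. intros; apply Hb; auto.
   rewrite RInt_const'. unfold rho. toR. field. lra. }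
 assert (Hp : 0 < p) by nra.
 assert (Hphi : I (fun x => phi (g x)) u v <= - ln m * p).
 { unfold p. rewrite <- RInt_scal' by auto. apply RInt_le'; [lra|apply cont_phi; auto|apply cont_mult; auto using cont_const|].
   intros x Hx. unfold phi. destruct (Hb x Hx). assert (ln m <= ln (g x)) by (apply Rcomplements.ln_le; lra). nra. }
 assert (Hd : m * (D^3 / 12) <= d).
 { unfold d. eapply Rle_trans. apply Rmult_le_compat_l. lra. apply (sq_int_lower c u v). lra.
   rewrite <- RInt_scal' by apply cont_sq. apply RInt_le'; [lra| apply cont_mult; auto using cont_const, cont_sq | apply cont_sqg; auto|].
   intros x Hx. destruct (Hb x Hx). pose proof (pow2_ge_0 (x - c)). nra. }
 assert (Hlp : ln p <= ln rho + ln m + ln D).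
 { rewrite <- ln_mult, <- ln_mult by nra. apply Rcomplements.ln_le; auto. }
 assert (Hld : lam * (p * D^2 / (12 * rho)) <= lam * d).
 { apply Rmult_le_compat_l; [lra|]. eapply Rle_trans; [|apply Hd].
   assert (p / rho <= m * D). { apply (Rmult_le_reg_l rho); auto. replace (rho * (p / rho)) with (p:R) by (toR; field; lra). nra. }
   assert (0 <= D^2 / 12) by (apply Rmult_le_pos; [apply pow2_ge_0|lra]).
   replace (p * D ^ 2 / (12 * rho)) with ((p / rho) * (D^2/12)) by (toR; field; lra).
   replace (m * (D^3/12)) with ((m * D) * (D^2/12)) by (toR; field). apply Rmult_le_compat_r; auto. }
 pose proof (bracket lam D rho Hl HD Hrho).
 assert (ln rho = ln (m + 2 * w) - ln m).
 { unfold rho. unfold Rdiv. rewrite ln_mult, ln_Rinv; try lra. apply Rinv_0_lt_compat; lra. }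
 assert (p * ln p <= p * (ln rho + ln m + ln D)) by (apply Rmult_le_compat_l; lra).
 assert (p * ((/2 * ln (lam/6) + /2) + ln D - lam * D^2 / (12 * rho)) <= p * (/2 * ln rho)) by (apply Rmult_le_compat_l; lra).
 assert (lam * (p * D^2 / (12 * rho)) = p * (lam * D^2 / (12 * rho))) by (field; lra).
 fold rho. nra.
Qed.

Lemma mass_bound g c u v r M : cont g -> (forall x, 0 <= g x) -> u <= v -> 0 < r -> 0 <= M ->
  (forall x, u <= x <= v -> g x <= M) ->
  I g u v <= PI * r * M + I (fun x => (x - c)^2 * g x) u v / r^2.
Proof. intros Hc Hg Huv Hr HM Hb.
 set (cau := fun x => / (1 + ((x - c) / r)^2)).
 assert (Hcau : cont cau) by (apply cont_cauchy; auto).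
 assert (Hpt : forall x, u <= x <= v -> g x <= M * cau x + / r^2 * ((x - c)^2 * g x)).
 { intros x Hx. unfold cau. set (t2 := ((x - c) / r)^2).
   assert (Ht : 0 <= t2) by apply pow2_ge_0.
   assert (E : / r^2 * ((x - c)^2 * g x) = t2 * g x) by (unfold t2; field; lra). rewrite E.
   assert (g x * (1 - t2) <= M * / (1 + t2)).
   { pose proof (Hg x). pose proof (Hb x Hx). assert (0 < / (1 + t2)) by (apply Rinv_0_lt_compat; lra).
     destruct (Rle_dec 1 t2). nra.
     assert (M * (1 - t2) <= M * / (1 + t2)).
     { apply Rmult_le_compat_l; auto. apply (Rmult_le_reg_l (1 + t2)); [lra|].
       rewrite Rinv_r by lra. nra. }
     nra. }
   nra. }
 eapply Rle_trans. apply RInt_le'; [auto|auto| |apply Hpt].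
 { apply cont_plus; apply cont_mult; auto using cont_const, cont_sqg. }
 rewrite RInt_plus' by (apply cont_mult; auto using cont_const, cont_sqg).
 rewrite !RInt_scal' by auto using cont_sqg.
 pose proof (RInt_cauchy_le c r u v Hr). fold cau in H.
 assert (M * I cau u v <= M * (r * PI)) by (apply Rmult_le_compat_l; auto).
 unfold Rdiv. nra. Qed.

Definition c0 := ln PI - /2 * ln 6 + /2.
Definition c1 := Rmax 0 c0.
Definition Klam (lam : R) := /2 * ln (lam / 6) + /2.

Lemma c1_ge0 : 0 <= c1.
Proof. apply Rmax_l. Qed.

Lemma gibbs_T g c u v lam : cont g -> (forall x, 0 <= g x) -> u <= v -> 0 < lam -> 0 < I g u v ->
  I (fun x => phi (g x)) u v + Klam lam * I g u v + I g u v * ln (I g u v)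
  - lam * I (fun x => (x - c)^2 * g x) u v <= c1 * I g u v.
Proof. intros Hc Hg Huv Hl Hp.
 assert (Hs : 0 < / sqrt lam) by (apply Rinv_0_lt_compat, sqrt_lt_R0; auto).
 pose proof (gibbs_cell g c (/ sqrt lam) u v Hc Hg Hs Huv Hp) as G.
 set (p := I g u v) in *. set (d := I (fun x => (x - c)^2 * g x) u v) in *.
 assert (E1 : ln (PI * / sqrt lam) = ln PI - /2 * ln lam).
 { pose proof PI_RGT_0. pose proof (sqrt_lt_R0 lam Hl). rewrite ln_mult, ln_Rinv by auto.
   assert (ln lam = 2 * ln (sqrt lam)). { pattern lam at 1; rewrite <- (sqrt_sqrt lam) by lra. rewrite ln_mult by auto. ring. }
   lra. }
 assert (E2 : d / (/ sqrt lam)^2 = lam * d).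
 { pose proof (sqrt_lt_R0 lam Hl). replace ((/ sqrt lam)^2) with (/ lam). field. lra.
   rewrite <- Rinv_pow by lra. simpl. rewrite Rmult_1_r, sqrt_sqrt by lra. auto. }
 assert (E3 : Klam lam = /2 * ln lam - /2 * ln 6 + /2).
 { unfold Klam. unfold Rdiv. rewrite ln_mult, ln_Rinv by lra. ring. }
 rewrite E1, E2 in G. rewrite E3.
 assert (c0 * p <= c1 * p) by (apply Rmult_le_compat_r; [lra| apply Rmax_r]).
 unfold c0 in H. nra. Qed.

Lemma cell_bound g a b c u v lam M gam w eta r :
  good g a b -> a <= u -> u < v -> v <= b -> 0 < lam -> 0 < gam -> 0 <= w -> 0 < eta -> 0 < r -> 0 <= M ->
  (forall x, a <= x <= b -> g x <= M) ->
  (forall x y, a <= x <= b -> a <= y <= b -> Rabs (x - y) < eta -> Rabs (g x - g y) < w) ->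
  I (fun x => phi (g x)) u v + Klam lam * I g u v + I g u v * ln (I g u v)
  - lam * I (fun x => (x - c)^2 * g x) u v <=
  3/2 * ln (1 + 2 * w / gam) * I g u v
  + (c1 * (gam + 2 * w) + c1 * PI * r * M / eta) * (v - u)
  + c1 / r^2 * I (fun x => (x - c)^2 * g x) u v.
Proof. intros [Hab [Hc [Hg [H1 Hpos]]]] Hau Huv Hvb Hl Hgam Hw Heta Hr HM HMb Hmod.
 pose proof (Hpos u v Hau Huv Hvb) as Hp.
 pose proof (gibbs_T g c u v lam Hc Hg ltac:(lra) Hl Hp) as G.
 set (p := I g u v) in *. set (d := I (fun x => (x - c)^2 * g x) u v) in *.
 set (T := I (fun x => phi (g x)) u v + Klam lam * p + p * ln p - lam * d) in *.
 assert (Hd : 0 <= d) by (apply RInt_ge0; [lra|apply cont_sqg; auto|intros; pose proof (Hg x); pose proof (pow2_ge_0 (x-c)); nra]).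
 assert (Hc1 := c1_ge0). pose proof PI_RGT_0.
 assert (Hal : 0 <= 3/2 * ln (1 + 2 * w / gam)).
 { assert (0 <= ln (1 + 2 * w / gam)). { rewrite <- ln_1. apply Rcomplements.ln_le; [lra|]. assert (0 <= 2 * w / gam) by (apply Rmult_le_pos; [lra|apply Rlt_le, Rinv_0_lt_compat; lra]). lra. } lra. }
 assert (Hbe0 : 0 <= (c1 * (gam + 2 * w) + c1 * PI * r * M / eta) * (v - u)).
 { apply Rmult_le_pos; [|lra]. apply Rplus_le_le_0_compat. apply Rmult_le_pos; lra.
   apply Rmult_le_pos; [|apply Rlt_le, Rinv_0_lt_compat; lra]. apply Rmult_le_pos; [|lra]. apply Rmult_le_pos; [|lra]. nra. }
 assert (Hka : 0 <= c1 / r^2 * d). { apply Rmult_le_pos; auto. apply Rmult_le_pos; auto. apply Rlt_le, Rinv_0_lt_compat. nra. }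
 assert (Hmodu : forall x, u <= x <= v -> Rabs (g x - g u) < w \/ v - u >= eta).
 { intros x Hx. destruct (Rlt_dec (v - u) eta); [left|right; lra]. apply Hmod; try lra. rewrite Rabs_right; lra. }
 destruct (Rlt_dec (v - u) eta) as [Hsm|Hlg].
 - destruct (Rle_dec (gam + w) (g u)) as [Hnice|Hlow].
   +
     set (m := g u - w).
     assert (Hm : gam <= m) by (unfold m; lra).
     assert (Hb : forall x, u <= x <= v -> m <= g x <= m + 2 * w).
     { intros x Hx. destruct (Hmodu x Hx) as [Hx'|]; [|lra]. apply Rabs_def2 in Hx'. unfold m; lra. }
     pose proof (nice_cell g c u v lam m w Hc Hg Huv ltac:(lra) Hl Hw Hb) as N. change (/2 * ln (lam/6) + /2) with (Klam lam) in N. fold p d T in N.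
     assert (ln ((m + 2 * w) / m) <= ln (1 + 2 * w / gam)).
     { apply Rcomplements.ln_le. apply Rdiv_lt_0_compat; lra.
       replace ((m + 2 * w) / m) with (1 + 2 * w / m) by (field; lra).
       apply Rplus_le_compat_l. unfold Rdiv. apply Rmult_le_compat_l; [lra|]. apply Rinv_le_contravar; lra. }
     assert (3/2 * ln ((m + 2 * w) / m) * p <= 3/2 * ln (1 + 2 * w / gam) * p) by (apply Rmult_le_compat_r; lra).
     lra.
   + (* low density *)
     assert (p <= (gam + 2 * w) * (v - u)).
     { unfold p. replace ((gam + 2 * w) * (v - u)) with (I (fun _ => gam + 2 * w) u v) by (rewrite RInt_const'; ring).
       apply RInt_le'; auto using cont_const; [lra|]. intros x Hx. destruct (Hmodu x Hx) as [Hx'|]; [|lra].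
       apply Rabs_def2 in Hx'. lra. }
     assert (c1 * p <= c1 * ((gam + 2 * w) * (v - u))) by (apply Rmult_le_compat_l; auto).
     assert (0 <= c1 * PI * r * M / eta * (v - u)).
     { apply Rmult_le_pos; [|lra]. apply Rmult_le_pos; [|apply Rlt_le, Rinv_0_lt_compat; lra]. apply Rmult_le_pos; [|lra]. apply Rmult_le_pos; [|lra]. nra. }
     assert (0 <= 3/2 * ln (1 + 2 * w / gam) * p) by (apply Rmult_le_pos; lra).
     nra.
 - (* large cell *)
   pose proof (mass_bound g c u v r M Hc Hg ltac:(lra) Hr HM ltac:(intros; apply HMb; lra)) as MB. fold p d in MB.
   assert (PI * r * M <= PI * r * M / eta * (v - u)).
   { assert (0 <= PI * r * M) by (apply Rmult_le_pos; [|lra]; nra).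
     replace (PI * r * M / eta * (v - u)) with (PI * r * M * ((v - u) / eta)) by (field; lra).
     rewrite <- (Rmult_1_r (PI * r * M)) at 1. apply Rmult_le_compat_l; auto.
     apply (Rmult_le_reg_l eta); auto. replace (eta * ((v - u) / eta)) with (v - u) by (field; lra). lra. }
   assert (c1 * p <= c1 * (PI * r * M / eta * (v - u)) + c1 / r^2 * d).
   { replace (c1 / r^2 * d) with (c1 * (d / r^2)) by (field; lra). rewrite <- Rmult_plus_distr_l. apply Rmult_le_compat_l; lra. }
   assert (0 <= c1 * (gam + 2 * w) * (v - u)) by (apply Rmult_le_pos; [apply Rmult_le_pos|]; lra).
   assert (0 <= 3/2 * ln (1 + 2 * w / gam) * p) by (apply Rmult_le_pos; lra).
   nra.
Qed.

Definition part (a b : R) (n : nat) (x : nat -> R) : Prop :=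
  x O = a /\ x n = b /\ (forall i, (i < n)%nat -> x i < x (S i)).

Lemma part_mono a b n x : part a b n x -> forall i j, (i <= j <= n)%nat -> x i <= x j.
Proof. intros [H0 [Hn Hs]] i j [Hij Hjn]. induction j.
 - assert (i = O) by lia. subst. lra.
 - destruct (Nat.eq_dec i (S j)). subst; lra.
   assert (x i <= x j) by (apply IHj; lia). assert (x j < x (S j)) by (apply Hs; lia). lra. Qed.

Lemma part_bounds a b n x : part a b n x -> forall i, (i <= n)%nat -> a <= x i <= b.
Proof. intros Hp i Hi. pose proof (part_mono a b n x Hp). destruct Hp as [H0 [Hn _]].
 split. rewrite <- H0. apply H; lia. rewrite <- Hn. apply H; lia. Qed.

Definition pr g (x : nat -> R) i := I g (x i) (x (S i)).
Definition Hn n g x := rsum n (fun i => - (pr g x i * ln (pr g x i))).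
Definition Dg n g x (cq : nat -> R) := rsum n (fun i => I (fun t => (t - cq i)^2 * g t) (x i) (x (S i))).
Definition Phi g a b := I (fun t => phi (g t)) a b.

Lemma sum_pr a b n g x : good g a b -> part a b n x -> rsum n (pr g x) = 1.
Proof. intros [_ [Hc [_ [H1 _]]]] [H0 [Hn _]]. unfold pr. rewrite RInt_part by auto. rewrite H0, Hn. auto. Qed.

Lemma quant_sum_bound g a b n x cq lam M gam w eta r :
  good g a b -> part a b n x -> 0 < lam -> 0 < gam -> 0 <= w -> 0 < eta -> 0 < r -> 0 <= M ->
  (forall x, a <= x <= b -> g x <= M) ->
  (forall x y, a <= x <= b -> a <= y <= b -> Rabs (x - y) < eta -> Rabs (g x - g y) < w) ->
  Phi g a b + Klam lam - Hn n g x - lam * Dg n g x cq <=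
  3/2 * ln (1 + 2 * w / gam) + (c1 * (gam + 2 * w) + c1 * PI * r * M / eta) * (b - a)
  + c1 / r^2 * Dg n g x cq.
Proof. intros Hg Hp Hl Hgam Hw Heta Hr HM HMb Hmod.
 pose proof (sum_pr a b n g x Hg Hp) as S1.
 pose proof Hg as [Hab [Hc [Hg0 [H1 Hpos]]]].
 assert (EPhi : Phi g a b = rsum n (fun i => I (fun t => phi (g t)) (x i) (x (S i)))).
 { unfold Phi. rewrite RInt_part by (apply cont_phi; auto). destruct Hp as [-> [-> _]]. auto. }
 assert (ED : rsum n (fun i => x (S i) - x i) = b - a).
 { rewrite rsum_telescope. destruct Hp as [-> [-> _]]. auto. }
 set (A := 3/2 * ln (1 + 2 * w / gam)). set (B := c1 * (gam + 2 * w) + c1 * PI * r * M / eta). set (C := c1 / r^2).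
 assert (Hsum : rsum n (fun i => I (fun t => phi (g t)) (x i) (x (S i)) + Klam lam * pr g x i
     + pr g x i * ln (pr g x i) - lam * I (fun t => (t - cq i)^2 * g t) (x i) (x (S i)))
   <= rsum n (fun i => A * pr g x i + B * (x (S i) - x i) + C * I (fun t => (t - cq i)^2 * g t) (x i) (x (S i)))).
 { apply rsum_le. intros i Hi. destruct Hp as [Hx0 [Hxn Hs]].
   pose proof (part_bounds a b n x (conj Hx0 (conj Hxn Hs)) i ltac:(lia)).
   pose proof (part_bounds a b n x (conj Hx0 (conj Hxn Hs)) (S i) ltac:(lia)).
   unfold pr, A, B, C. apply cell_bound with (a := a) (b := b); auto; try lra; try (apply Hs; auto). }
 rewrite !rsum_plus, !rsum_minus, !rsum_plus, !rsum_scal in Hsum.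

 rewrite S1, ED, <- EPhi in Hsum. unfold Hn, Dg.
 assert (rsum n (fun i => - (pr g x i * ln (pr g x i))) = - rsum n (fun i => pr g x i * ln (pr g x i))).
 { rewrite (rsum_ext n _ (fun i => -1 * (pr g x i * ln (pr g x i)))) by (intros; ring).
   rewrite rsum_scal. ring. }
 rewrite H. lra.
Qed.

Lemma frac_le e y : 0 < e -> 0 <= y -> y * (e / (5 * (y + 1))) <= e / 5.
Proof. intros. replace (y * (e / (5 * (y + 1)))) with (e / 5 * (y / (y + 1))) by (field; lra).
 rewrite <- (Rmult_1_r (e/5)) at 2. apply Rmult_le_compat_l; [lra|].
 apply (Rmult_le_reg_l (y + 1)); [lra|]. replace ((y + 1) * (y / (y + 1))) with y by (field; lra). lra. Qed.

Lemma ln1p_le x : 0 <= x -> ln (1 + x) <= x.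
Proof. intros. pose proof (ln_le_sub1 (1 + x) ltac:(lra)). lra. Qed.

Lemma g_bounded g a b : a <= b -> cont g -> (forall x, 0 <= g x) -> exists M, 0 <= M /\ forall x, a <= x <= b -> g x <= M.
Proof. intros Hab Hc Hg. destruct (continuity_ab_maj g a b Hab (fun c _ => Hc c)) as [Mx [HM _]].
 exists (g Mx). split; auto. Qed.

Lemma lower_key g a b : good g a b -> forall eps, 0 < eps -> exists D0, 0 < D0 /\
  forall lam n x cq, 0 < lam -> part a b n x -> Dg n g x cq <= D0 ->
  Phi g a b + Klam lam - eps <= Hn n g x + lam * Dg n g x cq.
Proof. intros Hg eps Heps. pose proof Hg as [Hab [Hc [Hg0 [H1 Hpos]]]].
 destruct (g_bounded g a b ltac:(lra) Hc Hg0) as [M [HM HMb]].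
 pose proof c1_ge0 as Hc1. pose proof PI_RGT_0 as HPI.
 set (Y1 := c1 * (b - a)).
 assert (HY1 : 0 <= Y1) by (unfold Y1; apply Rmult_le_pos; lra).
 set (gam := eps / (5 * (Y1 + 1))).
 assert (Hgam : 0 < gam) by (unfold gam; apply Rdiv_lt_0_compat; lra).
 set (w := Rmin (eps * gam / 15) (eps / (10 * (Y1 + 1)))).
 assert (Hw : 0 < w). { unfold w. apply Rmin_pos. apply Rdiv_lt_0_compat; nra. apply Rdiv_lt_0_compat; lra. }
 destruct (@Heine_cor1 g a b Hab (fun x _ => Hc x) (mkposreal w Hw)) as [eta [_ Heta]]. simpl in Heta.
 pose proof (cond_pos eta) as Heta0.
 set (Y2 := c1 * PI * M * (b - a)).
 assert (HY2 : 0 <= Y2) by (unfold Y2; apply Rmult_le_pos; [|lra]; apply Rmult_le_pos; [|lra]; nra).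
 set (r := eps * eta / (5 * (Y2 + 1))).
 assert (Hr : 0 < r) by (unfold r; apply Rdiv_lt_0_compat; nra).
 exists (eps * r^2 / (5 * (c1 + 1))). split.
 { apply Rdiv_lt_0_compat; [|lra]. apply Rmult_lt_0_compat; auto. nra. }
 intros lam n x cq Hl Hp HD.
 pose proof (quant_sum_bound g a b n x cq lam M gam w eta r Hg Hp Hl Hgam ltac:(lra) Heta0 Hr HM HMb
   ltac:(intros; apply Rlt_le_trans with w; [apply Heta; auto| lra])) as Q.
 set (Dq := Dg n g x cq) in *.
 assert (Dq >= 0 \/ Dq < 0) by lra.
 assert (T1 : 3/2 * ln (1 + 2 * w / gam) <= eps / 5).
 { assert (0 <= 2 * w / gam) by (apply Rdiv_le_0_compat; lra).
   pose proof (ln1p_le _ H0) as L1. assert (W1 : w <= eps * gam / 15) by apply Rmin_l.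
   assert (W2 : 2 * w / gam <= 2 * (eps * gam / 15) / gam). { unfold Rdiv. apply Rmult_le_compat_r. apply Rlt_le, Rinv_0_lt_compat; auto. lra. }
   replace (2 * (eps * gam / 15) / gam) with (2 * eps / 15) in W2 by (field; lra). lra. }
 assert (T2 : c1 * gam * (b - a) <= eps / 5).
 { replace (c1 * gam * (b - a)) with (Y1 * (eps / (5 * (Y1 + 1)))) by (unfold gam; unfold Y1 in *; field; lra). apply frac_le; auto. }
 assert (T3 : c1 * (2 * w) * (b - a) <= eps / 5).
 { assert (w <= eps / (10 * (Y1 + 1))) by apply Rmin_r.
   assert (E2 : c1 * (2 * w) * (b - a) = 2 * Y1 * w) by (unfold Y1; ring). rewrite E2.
   assert (W3 : 2 * Y1 * w <= 2 * Y1 * (eps / (10 * (Y1 + 1)))) by (apply Rmult_le_compat_l; lra).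
   replace (2 * Y1 * (eps / (10 * (Y1 + 1)))) with (Y1 * (eps / (5 * (Y1 + 1)))) in W3 by (field; lra).
   pose proof (frac_le eps Y1 Heps HY1). lra. }
 assert (T4 : c1 * PI * r * M / eta * (b - a) <= eps / 5).
 { replace (c1 * PI * r * M / eta * (b - a)) with (Y2 * (eps / (5 * (Y2 + 1)))) by (unfold r; unfold Y2 in *; field; split; lra).
   apply frac_le; auto. }
 assert (T5 : c1 / r^2 * Dq <= eps / 5).
 { assert (Hr2 : 0 < r^2) by nra.
   assert (W5 : c1 / r^2 * Dq <= c1 / r^2 * (eps * r^2 / (5 * (c1 + 1)))).
   { destruct H. apply Rmult_le_compat_l; auto. apply Rdiv_le_0_compat; lra. 
     assert (c1 / r^2 * Dq <= 0). { assert (0 <= c1 / r^2) by (apply Rdiv_le_0_compat; lra). nra. }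
     assert (0 <= c1 / r^2 * (eps * r^2 / (5 * (c1 + 1)))). { apply Rmult_le_pos; apply Rdiv_le_0_compat; nra. } lra. }
   replace (c1 / r^2 * (eps * r^2 / (5 * (c1 + 1)))) with (c1 * (eps / (5 * (c1 + 1)))) in W5 by (field; lra).
   pose proof (frac_le eps c1 Heps Hc1). lra. }
 assert ((c1 * (gam + 2 * w) + c1 * PI * r * M / eta) * (b - a) = c1 * gam * (b - a) + c1 * (2 * w) * (b - a) + c1 * PI * r * M / eta * (b - a)) by ring.
 lra.
Qed.

Lemma ceil_spec x : 0 < x -> (1 <= ceil_nat x)%nat /\ x <= INR (ceil_nat x) < x + 1.
Proof. intros Hx. unfold ceil_nat. destruct (archimed (- x)) as [H1 H2].
 set (z := (1 - up (- x))%Z).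
 assert (Ez : IZR z = 1 - IZR (up (- x))) by (unfold z; rewrite minus_IZR; auto).
 assert (Hz1 : x <= IZR z) by lra. assert (Hz2 : IZR z < x + 1) by lra.
 assert (Hzpos : (0 < z)%Z) by (apply lt_IZR; lra).
 rewrite INR_IZR_INZ, Z2Nat.id by lia. split; [|lra].
 assert (1 <= Z.to_nat z)%nat by lia. auto. Qed.

Definition ux (a b delta : R) (i : nat) : R := Rmin (a + INR i * delta) b.


Lemma ux_lt a b delta i : 0 < delta -> a < b -> (i < ceil_nat ((b - a) / delta))%nat -> ux a b delta i = a + INR i * delta.
Proof. intros Hd Hab Hi. unfold ux. apply Rmin_left.
 destruct (ceil_spec ((b - a)/delta) ltac:(apply Rdiv_lt_0_compat; lra)) as [_ [_ H2]].
 set (n := ceil_nat ((b - a) / delta)) in *.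
 assert (INR i + 1 <= INR n). { rewrite <- S_INR. apply le_INR. lia. }
 assert (INR i < (b - a) / delta) by lra.
 apply Rlt_le. apply (Rmult_lt_compat_r delta) in H0; auto. unfold Rdiv in H0. rewrite Rmult_assoc, Rinv_l in H0 by lra. lra. Qed.

Lemma ux_n a b delta : 0 < delta -> a < b -> ux a b delta (ceil_nat ((b - a) / delta)) = b.
Proof. intros Hd Hab. unfold ux. apply Rmin_right.
 destruct (ceil_spec ((b - a)/delta) ltac:(apply Rdiv_lt_0_compat; lra)) as [_ [H1 _]].
 apply (Rmult_le_compat_r delta) in H1; [|lra]. unfold Rdiv in H1. rewrite Rmult_assoc, Rinv_l in H1 by lra. lra. Qed.

Lemma ux_part a b delta : 0 < delta -> a < b -> part a b (ceil_nat ((b - a) / delta)) (ux a b delta).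
Proof. intros Hd Hab. split; [|split].
 - unfold ux. simpl. rewrite Rmult_0_l, Rplus_0_r. apply Rmin_left; lra.
 - apply ux_n; auto.
 - intros i Hi. rewrite ux_lt by auto. unfold ux. rewrite S_INR. apply Rmin_glb_lt; [lra|].
   pose proof (ux_lt a b delta i Hd Hab Hi). unfold ux in H.
   destruct (ceil_spec ((b - a)/delta) ltac:(apply Rdiv_lt_0_compat; lra)) as [_ [_ H2]].
   set (n := ceil_nat ((b - a) / delta)) in *.
   assert (INR i + 1 <= INR n). { rewrite <- S_INR. apply le_INR. lia. }
   assert (INR i < (b - a) / delta) by lra.
   apply (Rmult_lt_compat_r delta) in H1; auto. unfold Rdiv in H1. rewrite Rmult_assoc, Rinv_l in H1 by lra. lra. Qed.

Lemma ux_step a b delta i : 0 < delta -> a < b -> (i < ceil_nat ((b - a) / delta))%nat ->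
  0 < ux a b delta (S i) - ux a b delta i <= delta /\
  ((S i < ceil_nat ((b - a) / delta))%nat -> ux a b delta (S i) - ux a b delta i = delta).
Proof. intros Hd Hab Hi. pose proof (ux_part a b delta Hd Hab) as [_ [_ Hs]].
 rewrite (ux_lt a b delta i) by auto. split.
 - split. pose proof (Hs i Hi). rewrite (ux_lt a b delta i) in H by auto. lra.
   unfold ux. rewrite S_INR. assert (Rmin (a + (INR i + 1) * delta) b <= a + (INR i + 1) * delta) by apply Rmin_l. lra.
 - intros HS. rewrite ux_lt by auto. rewrite S_INR. ring. Qed.

Lemma ux_count a b delta : 0 < delta -> a < b -> INR (ceil_nat ((b - a) / delta)) * delta < b - a + delta.
Proof. intros. destruct (ceil_spec ((b - a)/delta) ltac:(apply Rdiv_lt_0_compat; lra)) as [_ [_ H2]].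
 apply (Rmult_lt_compat_r delta) in H2; auto. replace (((b - a) / delta + 1) * delta) with (b - a + delta) in H2 by (field; lra). auto. Qed.

Lemma cell_avg g a b u v w eta t : good g a b -> a <= u -> u < v -> v <= b -> v - u < eta ->
  (forall x y, a <= x <= b -> a <= y <= b -> Rabs (x - y) < eta -> Rabs (g x - g y) < w) ->
  u <= t <= v -> (g t - w) * (v - u) <= I g u v <= (g t + w) * (v - u).
Proof. intros [Hab [Hc [Hg0 _]]] Hau Huv Hvb Hve Hmod Ht.
 assert (Hpt : forall s, u <= s <= v -> g t - w <= g s <= g t + w).
 { intros s Hs. assert (Rabs (g s - g t) < w). { apply Hmod; try lra. apply Rabs_def1; lra. }
   apply Rabs_def2 in H. lra. }
 split.
 - replace ((g t - w) * (v - u)) with (I (fun _ => g t - w) u v) by (rewrite RInt_const'; ring).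
   apply RInt_le'; auto using cont_const; [lra|]. intros s Hs; apply Hpt; auto.
 - replace ((g t + w) * (v - u)) with (I (fun _ => g t + w) u v) by (rewrite RInt_const'; ring).
   apply RInt_le'; auto using cont_const; [lra|]. intros s Hs; apply Hpt; auto. Qed.

Lemma unif_dist_cell g a b u v w eta delta : good g a b -> a <= u -> u < v -> v <= b -> v - u < eta -> v - u <= delta ->
  (forall x y, a <= x <= b -> a <= y <= b -> Rabs (x - y) < eta -> Rabs (g x - g y) < w) ->
  I (fun s => (s - (u + v)/2)^2 * g s) u v <= (I g u v + w * (v - u)) * delta^2 / 12.
Proof. intros Hg Hau Huv Hvb Hve Hvd Hmod. pose proof Hg as [Hab [Hc [Hg0 _]]].
 set (p := I g u v). set (D := v - u).
 assert (Hb : forall s, u <= s <= v -> g s <= p / D + w).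
 { intros s Hs. destruct (cell_avg g a b u v w eta s Hg Hau Huv Hvb Hve Hmod Hs) as [H1 _]. fold p D in H1.
   assert (0 < D) by (unfold D; lra). apply (Rmult_le_reg_r D); auto.
   replace ((p / D + w) * D) with (p + w * D) by (field; lra). nra. }
 eapply Rle_trans. apply (RInt_le' _ (fun s => (p / D + w) * (s - (u + v)/2)^2)); [lra|apply cont_sqg; auto| apply cont_mult; auto using cont_const, cont_sq|].
 { intros s Hs. pose proof (Hb s Hs). pose proof (pow2_ge_0 (s - (u + v)/2)). nra. }
 rewrite RInt_scal' by apply cont_sq. rewrite sq_int_mid. fold D.
 assert (0 < D) by (unfold D; lra).
 replace ((p / D + w) * (D^3/12)) with ((p + w * D) * D^2 / 12) by (field; lra).
 assert (0 <= p) by (apply RInt_ge0; auto; lra).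
 assert (D^2 <= delta^2) by (apply pow_incr; unfold D in *; split; lra).
 assert (0 <= w). { pose proof (Hmod u u ltac:(lra) ltac:(lra) ltac:(rewrite Rminus_diag, Rabs_R0; lra)) as W. rewrite Rminus_diag, Rabs_R0 in W. lra. }
 assert (0 <= p + w * D) by nra.
 unfold Rdiv. apply Rmult_le_compat_r; [lra|]. apply Rmult_le_compat_l; auto. Qed.

Lemma ent_ident p delta : 0 <= p -> 0 < delta -> - (p * ln p) = - p * ln delta + delta * phi (p / delta).
Proof. intros Hp Hd. unfold phi. destruct (Req_dec p 0). subst. replace (0/delta) with 0 by (field; lra). rewrite ln_0. ring.
 unfold Rdiv. rewrite ln_mult, ln_Rinv by (try apply Rinv_0_lt_compat; lra). field. lra. Qed.

Lemma unif_ent_full g a b u v w eta delta M th e' : good g a b -> a <= u -> u < v -> v <= b -> v - u < eta -> v - u = delta ->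
  (forall x y, a <= x <= b -> a <= y <= b -> Rabs (x - y) < eta -> Rabs (g x - g y) < w) ->
  (forall x, a <= x <= b -> g x <= M) -> w < th ->
  (forall y z, 0 <= y <= M -> 0 <= z <= M -> Rabs (y - z) < th -> Rabs (phi y - phi z) < e') ->
  delta * phi (I g u v / delta) <= I (fun s => phi (g s)) u v + e' * delta.
Proof. intros Hg Hau Huv Hvb Hve Hvd Hmod HM Hth Hphi. pose proof Hg as [Hab [Hc [Hg0 _]]].
 set (p := I g u v).
 assert (Hd : 0 < delta) by lra.
 assert (Hpt : forall t, u <= t <= v -> phi (p / delta) <= phi (g t) + e').
 { intros t Ht. destruct (cell_avg g a b u v w eta t Hg Hau Huv Hvb Hve Hmod Ht) as [H1 H2]. fold p in H1, H2.
   rewrite Hvd in H1, H2.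
   assert (g t - w <= p / delta <= g t + w).
   { split; apply (Rmult_le_reg_r delta); auto; replace (p / delta * delta) with p by (field; lra); lra. }
   assert (0 <= p / delta <= M).
   { split. apply Rdiv_le_0_compat; auto. apply RInt_ge0; auto; lra.
     apply (Rmult_le_reg_r delta); auto; replace (p / delta * delta) with p by (field; lra).
     unfold p. rewrite <- Hvd. replace (M * (v - u)) with (I (fun _ => M) u v) by (rewrite RInt_const'; ring).
     apply RInt_le'; auto using cont_const; [lra|]. intros; apply HM; lra. }
   assert (Rabs (phi (p / delta) - phi (g t)) < e').
   { apply Hphi; auto. split; auto. apply HM; lra. apply Rabs_def1; lra. }
   apply Rabs_def2 in H3. lra. }
 replace (delta * phi (p / delta)) with (I (fun _ => phi (p / delta)) u v) by (rewrite RInt_const'; rewrite Hvd; ring).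
 replace (I (fun s => phi (g s)) u v + e' * delta) with (I (fun s => phi (g s) + e') u v).
 apply RInt_le'; [lra|apply cont_const|apply cont_plus; auto using cont_const, cont_phi|auto].
 rewrite RInt_plus' by auto using cont_const, cont_phi. rewrite RInt_const'. rewrite Hvd. ring. Qed.

Lemma unif_ent_last g a b u v delta M : good g a b -> a <= u -> u < v -> v <= b -> v - u <= delta ->
  (forall x, a <= x <= b -> g x <= M) ->
  delta * phi (I g u v / delta) <= I (fun s => phi (g s)) u v + (2 + M * M) * delta.
Proof. intros Hg Hau Huv Hvb Hvd HM. pose proof Hg as [Hab [Hc [Hg0 _]]].
 assert (Hd : 0 < delta) by lra.
 assert (0 <= I g u v) by (apply RInt_ge0; auto; lra).
 assert (phi (I g u v / delta) <= 2) by (apply xlnx_upper2; apply Rdiv_le_0_compat; auto).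
 assert (- (M * M) * (v - u) <= I (fun s => phi (g s)) u v).
 { replace (- (M * M) * (v - u)) with (I (fun _ => - (M * M)) u v) by (rewrite RInt_const'; ring).
   apply RInt_le'; auto using cont_const, cont_phi; [lra|]. intros s Hs. apply xlnx_lower. split; auto. apply HM; lra. }
 assert (0 <= M * M) by nra. nra. Qed.

Definition un a b delta := ceil_nat ((b - a) / delta).
Definition umid a b delta i := (ux a b delta i + ux a b delta (S i)) / 2.

Lemma upr_bounds g a b delta M i : good g a b -> 0 < delta -> (forall x, a <= x <= b -> g x <= M) ->
  (i < un a b delta)%nat -> 0 < pr g (ux a b delta) i <= M * delta.
Proof. intros Hg Hd HM Hi. pose proof Hg as [Hab [Hc [Hg0 [_ Hpos]]]]. unfold un in Hi.
 pose proof (ux_part a b delta Hd Hab) as Hp.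
 pose proof (part_bounds _ _ _ _ Hp i ltac:(lia)). pose proof (part_bounds _ _ _ _ Hp (S i) ltac:(lia)).
 destruct (ux_step a b delta i Hd Hab Hi) as [[S1 S2] _].
 unfold pr. split. apply Hpos; lra.
 apply Rle_trans with (M * (ux a b delta (S i) - ux a b delta i)).
 replace (M * (ux a b delta (S i) - ux a b delta i)) with (I (fun _ => M) (ux a b delta i) (ux a b delta (S i))) by (rewrite RInt_const'; ring).
 apply RInt_le'; auto using cont_const; [lra|]. intros; apply HM; lra.
 assert (0 <= M). { assert (0 <= g a) by auto. assert (g a <= M) by (apply HM; lra). lra. }
 apply Rmult_le_compat_l; lra. Qed.

Lemma udist_bound g a b delta w eta : good g a b -> 0 < delta -> delta < eta ->
  (forall x y, a <= x <= b -> a <= y <= b -> Rabs (x - y) < eta -> Rabs (g x - g y) < w) ->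
  Dg (un a b delta) g (ux a b delta) (umid a b delta) <= (1 + w * (b - a)) * delta^2 / 12.
Proof. intros Hg Hd He Hmod. pose proof Hg as [Hab _].
 pose proof (ux_part a b delta Hd Hab) as Hp.
 unfold Dg, un in *. eapply Rle_trans. apply (rsum_le _ _ (fun i => (pr g (ux a b delta) i + w * (ux a b delta (S i) - ux a b delta i)) * delta^2/12)).
 { intros i Hi. pose proof (part_bounds _ _ _ _ Hp i ltac:(lia)). pose proof (part_bounds _ _ _ _ Hp (S i) ltac:(lia)).
   destruct (ux_step a b delta i Hd Hab Hi) as [[S1 S2] _].
   unfold umid, pr. apply unif_dist_cell with (a:=a) (b:=b) (eta:=eta); auto; lra. }
 rewrite (rsum_ext _ _ (fun i => (delta^2/12) * pr g (ux a b delta) i + (w * delta^2/12) * (ux a b delta (S i) - ux a b delta i))) by (intros; field).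
 rewrite rsum_plus, !rsum_scal, rsum_telescope, (sum_pr a b _ g _ Hg Hp).
 destruct Hp as [H0 [Hn _]]. rewrite H0, Hn. right; field. Qed.

Lemma Hn_upper g a b delta w eta M th e' : good g a b -> 0 < delta -> delta < eta -> 0 <= e' ->
  (forall x y, a <= x <= b -> a <= y <= b -> Rabs (x - y) < eta -> Rabs (g x - g y) < w) ->
  (forall x, a <= x <= b -> g x <= M) -> w < th ->
  (forall y z, 0 <= y <= M -> 0 <= z <= M -> Rabs (y - z) < th -> Rabs (phi y - phi z) < e') ->
  Hn (un a b delta) g (ux a b delta) <= Phi g a b - ln delta + e' * (b - a) + (2 + M * M) * delta.
Proof. intros Hg Hd He He' Hmod HM Hth Hphi. pose proof Hg as [Hab [Hc [Hg0 _]]].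
 pose proof (ux_part a b delta Hd Hab) as Hp.
 pose proof (sum_pr a b _ g _ Hg Hp) as S1.
 destruct (ceil_spec ((b - a)/delta) ltac:(apply Rdiv_lt_0_compat; lra)) as [Hn1 [_ Hn2]].
 fold (un a b delta) in *.
 assert (Hpr0 : forall i, (i < un a b delta)%nat -> 0 <= pr g (ux a b delta) i).
 { intros i Hi. pose proof (part_bounds _ _ _ _ Hp i ltac:(lia)). pose proof (part_bounds _ _ _ _ Hp (S i) ltac:(lia)).
   destruct (ux_step a b delta i Hd Hab Hi) as [[S2 S3] _]. apply RInt_ge0; auto; lra. }
 unfold Hn. rewrite (rsum_ext _ _ (fun i => (- ln delta) * pr g (ux a b delta) i + delta * phi (pr g (ux a b delta) i / delta)))
   by (intros i Hi; rewrite (ent_ident _ delta) by auto; ring).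
 rewrite rsum_plus, rsum_scal, S1.
 destruct (un a b delta) as [|m] eqn:Em; [lia|].
 assert (Hstep : forall i, (i < S m)%nat -> 0 < ux a b delta (S i) - ux a b delta i <= delta /\
    ((S i < S m)%nat -> ux a b delta (S i) - ux a b delta i = delta)).
 { intros i Hi. pose proof (ux_step a b delta i Hd Hab). unfold un in Em. rewrite Em in H. auto. }
 assert (Hbd : forall i, (i <= S m)%nat -> a <= ux a b delta i <= b) by (intros; apply (part_bounds _ _ _ _ Hp); lia).
 assert (EPhi : Phi g a b = rsum (S m) (fun i => I (fun s => phi (g s)) (ux a b delta i) (ux a b delta (S i)))).
 { unfold Phi. rewrite RInt_part by (apply cont_phi; auto). destruct Hp as [-> [Hxn _]]. try rewrite Em in Hxn. rewrite Hxn; auto. }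
 cbn [rsum]. cbn [rsum] in EPhi.
 assert (Hfull : rsum m (fun i => delta * phi (pr g (ux a b delta) i / delta)) <=
   rsum m (fun i => I (fun s => phi (g s)) (ux a b delta i) (ux a b delta (S i)) + e' * delta)).
 { apply rsum_le. intros i Hi. destruct (Hstep i ltac:(lia)) as [[S2 S3] S4].
   pose proof (Hbd i ltac:(lia)). pose proof (Hbd (S i) ltac:(lia)).
   unfold pr. apply unif_ent_full with (a:=a) (b:=b) (w:=w) (eta:=eta) (M:=M) (th:=th); auto; try lra.
   apply S4; lia. }
 rewrite rsum_plus, rsum_const in Hfull.
 assert (Hlast : delta * phi (pr g (ux a b delta) m / delta) <= I (fun s => phi (g s)) (ux a b delta m) (ux a b delta (S m)) + (2 + M * M) * delta).
 { destruct (Hstep m ltac:(lia)) as [[S2 S3] _]. pose proof (Hbd m ltac:(lia)). pose proof (Hbd (S m) ltac:(lia)).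
   unfold pr. apply unif_ent_last with (a:=a) (b:=b); auto; lra. }
 assert (Hm : INR m * delta <= b - a).
 { rewrite S_INR in Hn2.
   assert (INR m < (b - a) / delta) by lra. apply (Rmult_lt_compat_r delta) in H; auto.
   replace ((b - a) / delta * delta) with (b - a) in H by (field; lra). lra. }
 assert (INR m * (e' * delta) <= e' * (b - a)).
 { replace (INR m * (e' * delta)) with (e' * (INR m * delta)) by ring. apply Rmult_le_compat_l; auto. }
 lra. Qed.

Lemma Hn_lower g a b delta M : good g a b -> 0 < delta -> 0 < M -> (forall x, a <= x <= b -> g x <= M) ->
  - ln (M * delta) <= Hn (un a b delta) g (ux a b delta).
Proof. intros Hg Hd HM HMb. pose proof Hg as [Hab _].
 pose proof (ux_part a b delta Hd Hab) as Hp.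
 pose proof (sum_pr a b _ g _ Hg Hp) as S1. fold (un a b delta) in S1.
 unfold Hn. rewrite <- (Rmult_1_r (- ln (M * delta))). rewrite <- S1, <- rsum_scal.
 apply rsum_le. intros i Hi. destruct (upr_bounds g a b delta M i Hg Hd HMb Hi) as [P1 P2].
 assert (ln (pr g (ux a b delta) i) <= ln (M * delta)) by (apply Rcomplements.ln_le; auto).
 nra. Qed.

Lemma Hvar g a b delta M : good g a b -> 0 < delta -> (forall x, a <= x <= b -> g x <= M) ->
  rsum (un a b delta) (fun i => pr g (ux a b delta) i * (ln (pr g (ux a b delta) i) - ln delta)^2)
  <= (b - a + delta) * (4 + M^3).
Proof. intros Hg Hd HMb. pose proof Hg as [Hab _].
 eapply Rle_trans. apply (rsum_le _ _ (fun _ => delta * (4 + M^3))).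
 { intros i Hi. destruct (upr_bounds g a b delta M i Hg Hd HMb Hi) as [P1 P2].
   set (p := pr g (ux a b delta) i) in *.
   assert (ln p - ln delta = ln (p / delta)) by (unfold Rdiv; rewrite ln_mult, ln_Rinv; try apply Rinv_0_lt_compat; auto; ring).
   rewrite H. replace (p * (ln (p / delta))^2) with (delta * ((p / delta) * (ln (p / delta))^2)) by (field; lra).
   apply Rmult_le_compat_l; [lra|]. apply xln2x_upper. split. apply Rlt_le, Rdiv_lt_0_compat; auto.
   apply (Rmult_le_reg_r delta); auto. replace (p / delta * delta) with p by (field; lra). lra. }
 rewrite rsum_const. pose proof (ux_count a b delta Hd Hab). fold (un a b delta) in H.
 assert (0 <= 4 + M^3).
 { assert (0 <= M). { destruct Hg as [_ [_ [Hg0 _]]]. assert (g a <= M) by (apply HMb; lra). pose proof (Hg0 a). lra. }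
   pose proof (pow_le M 3 H0). lra. }
 replace (INR (un a b delta) * (delta * (4 + M ^ 3))) with ((INR (un a b delta) * delta) * (4 + M^3)) by ring.
 apply Rmult_le_compat_r; lra. Qed.

Definition ELg n (p l : nat -> R) := rsum n (fun i => p i * l i).
Definition EL2g n (p l : nat -> R) := rsum n (fun i => p i * l i ^ 2).
Definition Hbits n (p : nat -> R) := rsum n (fun i => - (p i * log2 (p i))).
Definition Hnat n (p : nat -> R) := rsum n (fun i => - (p i * ln (p i))).

Lemma Hbits_nat n p : Hbits n p = Hnat n p / ln 2.
Proof. unfold Hbits, Hnat, log2. pose proof ln2_pos. unfold Rdiv. rewrite <- (Rmult_comm (/ ln 2)), <- rsum_scal.
 apply rsum_ext. intros; field. lra. Qed.

Lemma gibbs_disc p q : 0 <= p -> 0 < q -> p - q <= p * (ln p - ln q).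
Proof. intros. destruct (Req_dec p 0). subst. rewrite Rmult_0_l. lra.
 pose proof (ln_le_sub1 (q / p) ltac:(apply Rdiv_lt_0_compat; lra)).
 unfold Rdiv in H2. rewrite ln_mult, ln_Rinv in H2 by (try apply Rinv_0_lt_compat; lra).
 assert (p * (ln q - ln p) <= p * (q * / p - 1)) by (apply Rmult_le_compat_l; lra).
 replace (p * (q * / p - 1)) with (q - p) in H3 by (field; lra). lra. Qed.

Lemma EL_ge_H n p l : (forall i, (i < n)%nat -> 0 <= p i) -> rsum n p = 1 ->
  (forall i, (i < n)%nat -> 0 < l i) -> rsum n (fun i => Rpower 2 (- l i)) <= 1 ->
  Hbits n p <= ELg n p l.
Proof. intros Hp S1 Hl K. pose proof ln2_pos.
 assert (rsum n (fun i => (p i - Rpower 2 (- l i)) / ln 2) <= rsum n (fun i => p i * l i - (- (p i * log2 (p i))))).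
 { apply rsum_le. intros i Hi. unfold log2. pose proof (gibbs_disc (p i) (Rpower 2 (- l i)) (Hp i Hi) (exp_pos _)).
   unfold Rpower in H0. rewrite ln_exp in H0. apply (Rmult_le_reg_r (ln 2)); auto.
   replace ((p i - exp (- l i * ln 2)) / ln 2 * ln 2) with (p i - exp (- l i * ln 2)) by (field; lra).
   replace ((p i * l i - - (p i * (ln (p i) / ln 2))) * ln 2) with (p i * (ln (p i) - - l i * ln 2)) by (field; lra). unfold Rpower. replace ((p i - exp (- l i * ln 2)) / ln 2 * ln 2) with (p i - exp (- l i * ln 2)) by (field; lra). lra. }
 unfold Rdiv in H0. rewrite (rsum_ext n (fun i => (p i - Rpower 2 (- l i)) * / ln 2) (fun i => / ln 2 * (p i - Rpower 2 (- l i)))) in H0 by (intros; ring).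
 rewrite rsum_scal, rsum_minus, rsum_minus, S1 in H0. unfold Hbits, ELg.
 assert (0 <= / ln 2 * (1 - rsum n (fun i => Rpower 2 (- l i)))) by (apply Rmult_le_pos; [apply Rlt_le, Rinv_0_lt_compat|]; lra).
 lra. Qed.

Lemma EL2_ge n p l : (forall i, (i < n)%nat -> 0 <= p i) -> rsum n p = 1 -> ELg n p l ^ 2 <= EL2g n p l.
Proof. intros Hp S1. set (E := ELg n p l).
 assert (0 <= rsum n (fun i => p i * (l i - E)^2)) by (apply rsum_nonneg; intros; apply Rmult_le_pos; auto; apply pow2_ge_0).
 rewrite (rsum_ext _ _ (fun i => p i * l i ^ 2 + (-2 * E) * (p i * l i) + E^2 * p i)) in H by (intros; ring).
 rewrite !rsum_plus, !rsum_scal, S1 in H. unfold EL2g. fold (ELg n p l) in H. fold E in H. nra. Qed.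

Lemma EL_pos n p l : (forall i, (i < n)%nat -> 0 <= p i) -> rsum n p = 1 -> (forall i, (i < n)%nat -> 0 < l i) -> 0 < ELg n p l.
Proof. intros Hp S1 Hl.
 assert (exists j, (j < n)%nat /\ 0 < p j).
 { destruct (Classical_Prop.classic (exists j, (j < n)%nat /\ 0 < p j)); auto.
   assert (rsum n p <= rsum n (fun _ => 0)). { apply rsum_le. intros i Hi. destruct (Rle_dec (p i) 0); auto. exfalso; apply H; exists i; split; auto; lra. }
   rewrite rsum_const in H0. lra. }
 destruct H as [j [Hj Hpj]].
 assert (p j * l j <= ELg n p l) by (apply (rsum_term_le n (fun i => p i * l i)); auto; intros; apply Rmult_le_pos; auto; apply Rlt_le; auto).
 pose proof (Hl j Hj). nra. Qed.

Lemma aoi_lower n p l : (forall i, (i < n)%nat -> 0 <= p i) -> rsum n p = 1 ->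
  (forall i, (i < n)%nat -> 0 < l i) -> rsum n (fun i => Rpower 2 (- l i)) <= 1 ->
  3/2 * Hbits n p <= EL2g n p l / (2 * ELg n p l) + ELg n p l.
Proof. intros Hp S1 Hl K. pose proof (EL_ge_H n p l Hp S1 Hl K). pose proof (EL2_ge n p l Hp S1).
 pose proof (EL_pos n p l Hp S1 Hl). set (E := ELg n p l) in *.
 assert (E / 2 <= EL2g n p l / (2 * E)).
 { apply (Rmult_le_reg_r (2 * E)); [lra|]. replace (EL2g n p l / (2 * E) * (2 * E)) with (EL2g n p l) by (field; lra).
   replace (E / 2 * (2 * E)) with (E^2) by field. auto. }
 lra. Qed.

Lemma aoi_upper n p t V : (forall i, (i < n)%nat -> 0 < p i < 1) -> rsum n p = 1 ->
  rsum n (fun i => p i * (ln (p i) - t)^2) <= V -> 0 < Hnat n p ->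
  let l := fun i => - log2 (p i) in
  (forall i, (i < n)%nat -> 0 < l i) /\ rsum n (fun i => Rpower 2 (- l i)) <= 1 /\
  EL2g n p l / (2 * ELg n p l) + ELg n p l <= 3/2 * (Hnat n p / ln 2) + V / (2 * Hnat n p * ln 2).
Proof. intros Hp S1 HV HH l. pose proof ln2_pos. split; [|split].
 - intros i Hi. unfold l, log2. destruct (Hp i Hi). assert (ln (p i) < 0) by (rewrite <- ln_1; apply ln_increasing; lra).
   unfold Rdiv. assert (0 < / ln 2) by (apply Rinv_0_lt_compat; lra). nra.
 - rewrite (rsum_ext _ _ p). lra. intros i Hi. unfold l, log2, Rpower. rewrite Ropp_involutive.
   replace (ln (p i) / ln 2 * ln 2) with (ln (p i)) by (field; lra). rewrite exp_ln; auto. apply Hp; auto.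
 - set (Hn := Hnat n p) in *.
   assert (EE : ELg n p l = Hn / ln 2).
   { unfold ELg, Hn, Hnat, l, log2. unfold Rdiv. rewrite <- (Rmult_comm (/ ln 2)), <- rsum_scal. apply rsum_ext; intros; field; lra. }
   set (S2 := rsum n (fun i => p i * ln (p i) ^ 2)).
   assert (EE2 : EL2g n p l = S2 / (ln 2)^2).
   { unfold EL2g, S2, l, log2. unfold Rdiv. rewrite <- (Rmult_comm (/ ln 2 ^ 2)), <- rsum_scal. apply rsum_ext; intros; field; lra. }
   assert (Hvar : S2 - Hn^2 <= V).
   { rewrite (rsum_ext _ _ (fun i => p i * ln (p i) ^ 2 + (- 2 * t) * (p i * ln (p i)) + t^2 * p i)) in HV by (intros; ring).
     rewrite !rsum_plus, !rsum_scal, S1 in HV. fold S2 in HV.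
     assert (rsum n (fun i => p i * ln (p i)) = - Hn).
     { unfold Hn, Hnat. rewrite (rsum_ext _ (fun i => - (p i * ln (p i))) (fun i => -1 * (p i * ln (p i)))) by (intros; ring).
       rewrite rsum_scal. ring. }
     rewrite H0 in HV. pose proof (pow2_ge_0 (Hn + t)). nra. }
   rewrite EE, EE2.
   replace (S2 / ln 2 ^ 2 / (2 * (Hn / ln 2)) + Hn / ln 2) with (S2 / (2 * Hn * ln 2) + Hn / ln 2) by (field; lra).
   assert (S2 / (2 * Hn * ln 2) <= (Hn^2 + V) / (2 * Hn * ln 2)).
   { unfold Rdiv. apply Rmult_le_compat_r; [apply Rlt_le, Rinv_0_lt_compat; nra| lra]. }
   replace ((Hn^2 + V) / (2 * Hn * ln 2)) with (1/2 * (Hn / ln 2) + V / (2 * Hn * ln 2)) in H0 by (field; lra).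
   lra. Qed.

Lemma code_exists n : (1 <= n)%nat -> let l := fun _ : nat => ln (INR n) / ln 2 + 1 in
  (forall i, (i < n)%nat -> 0 < l i) /\ rsum n (fun i => Rpower 2 (- l i)) <= 1.
Proof. intros Hn l. pose proof ln2_pos. assert (1 <= INR n) by (replace 1 with (INR 1) by auto; apply le_INR; auto).
 assert (0 <= ln (INR n)) by (rewrite <- ln_1; apply Rcomplements.ln_le; lra).
 split. intros; unfold l. assert (0 <= ln (INR n) / ln 2) by (apply Rdiv_le_0_compat; lra). lra.
 unfold l. rewrite rsum_const. unfold Rpower.
 replace (- (ln (INR n) / ln 2 + 1) * ln 2) with (- (ln (INR n) + ln 2)) by (field; lra).
 rewrite <- ln_mult by lra. rewrite exp_Ropp, exp_ln by lra.
 replace (INR n * / (INR n * 2)) with (/2) by (field; lra). lra. Qed.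

Lemma glb_bounds (E : R -> Prop) L y : E y -> (forall z, E z -> L <= z) -> L <= real (Glb_Rbar E) <= y.
Proof. intros Ey Hlb. destruct (Glb_Rbar_correct E) as [H1 H2].
 assert (A1 : Rbar_le (Glb_Rbar E) y) by (apply H1; auto).
 assert (A2 : Rbar_le L (Glb_Rbar E)) by (apply H2; intros z Hz; simpl; apply Hlb; auto).
 destruct (Glb_Rbar E); simpl in *; try contradiction. split; auto. Qed.

Lemma ball_R (y z e : R) : ball y e z <-> Rabs (z - y) < e.
Proof. unfold ball; simpl; unfold AbsRing_ball, abs, minus, plus, opp; simpl. tauto. Qed.

Lemma within_eps f (D : R -> Prop) y : filterlim f (within D (locally y)) (locally (f y)) ->
  forall eps, 0 < eps -> exists del, 0 < del /\ forall z, Rabs (z - y) < del -> D z -> Rabs (f z - f y) < eps.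
Proof. intros H eps Heps. apply filterlim_locally with (eps := mkposreal eps Heps) in H.
 destruct H as [e He]. exists e. split. apply cond_pos.
 intros z Hz Dz. specialize (He z (proj2 (ball_R _ _ _) Hz) Dz). apply ball_R in He. auto. Qed.

Definition clamp a b x := Rmax a (Rmin x b).

Lemma clamp_in a b x : a <= b -> a <= clamp a b x <= b.
Proof. intros. unfold clamp. split. apply Rmax_l. apply Rmax_lub; [lra|apply Rmin_r]. Qed.

Lemma clamp_id a b x : a <= x <= b -> clamp a b x = x.
Proof. intros. unfold clamp. rewrite Rmin_left by lra. rewrite Rmax_right by lra. auto. Qed.

Lemma clamp_lip a b x y : a <= b -> Rabs (clamp a b x - clamp a b y) <= Rabs (x - y).
Proof. intros. unfold clamp, Rmax, Rmin.
 destruct (Rle_dec x b); destruct (Rle_dec y b);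
 repeat match goal with |- context [Rle_dec ?u ?v] => destruct (Rle_dec u v) end;
 unfold Rabs; repeat match goal with |- context [Rcase_abs ?u] => destruct (Rcase_abs u) end; lra. Qed.

Lemma g_cont f a b : a < b ->
  (forall x, a <= x <= b -> filterlim f (within (fun y => a <= y <= b) (locally x)) (locally (f x))) ->
  cont (fun x => f (clamp a b x)).
Proof. intros Hab HA x. intros eps Heps.
 set (y := clamp a b x). pose proof (clamp_in a b x ltac:(lra)) as Hy. fold y in Hy.
 destruct (within_eps f _ y (HA y Hy) eps Heps) as [del [Hdel Hd]].
 exists del. split; [lra|]. intros z [_ Hz]. simpl in *. unfold R_dist in *.
 apply Hd. eapply Rle_lt_trans. apply clamp_lip; lra. auto. apply clamp_in; lra. Qed.

Lemma good_of f a b : pdf_on f a b -> condA f a b -> good (fun x => f (clamp a b x)) a b.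
Proof. intros [Hab [Hf0 [Hsup [Hex H1]]]] [HA _].
 set (g := fun x => f (clamp a b x)).
 assert (Hc : cont g) by (apply g_cont; auto).
 assert (Heq : forall x, a <= x <= b -> g x = f x) by (intros; unfold g; rewrite clamp_id; auto).
 split; [auto|split; [auto|split; [intros; apply Hf0|split]]].
 - rewrite <- H1. unfold I. apply RInt_ext. intros x Hx. rewrite Rmin_left, Rmax_right in Hx by lra. apply Heq; lra.
 - intros u v Hau Huv Hvb.
   set (m := (u + v) / 2).
   destruct (proj2 (Hsup m) ltac:(unfold m; lra) ((v - u)/2) ltac:(lra)) as [y [Hy Hfy]].
   apply Rabs_def2 in Hy. unfold m in Hy.
   assert (Hgy : 0 < g y). { rewrite Heq by lra. pose proof (Hf0 y). lra. }
   destruct (Hc y (g y / 2) ltac:(lra)) as [rho [Hrho Hr]].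
   set (r := Rmin (rho / 2) (Rmin ((y - u) / 2) ((v - y) / 2))).
   assert (Hr0 : 0 < r) by (unfold r; repeat apply Rmin_pos; lra).
   assert (Hr1 : r <= rho / 2) by apply Rmin_l.
   assert (Hr2 : r <= (y - u) / 2) by (eapply Rle_trans; [apply Rmin_r|apply Rmin_l]).
   assert (Hr3 : r <= (v - y) / 2) by (eapply Rle_trans; [apply Rmin_r|apply Rmin_r]).
   assert (Hpt : forall z, y - r <= z <= y + r -> g y / 2 <= g z).
   { intros z Hz. destruct (Req_dec z y). subst; lra.
     assert (R_dist (g z) (g y) < g y / 2). { apply Hr. split; [split; [constructor| intro E; apply H; auto]|]. simpl. unfold R_dist. apply Rabs_def1; lra. }
     unfold R_dist in H0. apply Rabs_def2 in H0. lra. }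
   assert (Hg0 : forall z, 0 <= g z) by (intros; apply Hf0).
   assert (E1 : I g u v = I g u (y - r) + I g (y - r) (y + r) + I g (y + r) v).
   { unfold I. rewrite <- (RInt_Chasles g u (y - r) v) by (apply exR; auto).
     rewrite <- (RInt_Chasles g (y - r) (y + r) v) by (apply exR; auto).
     unfold plus; simpl. toR. ring. }
   rewrite E1.
   assert (0 <= I g u (y - r)) by (apply RInt_ge0; auto; lra).
   assert (0 <= I g (y + r) v) by (apply RInt_ge0; auto; lra).
   assert (((y + r) - (y - r)) * (g y / 2) <= I g (y - r) (y + r)).
   { rewrite <- RInt_const'. apply RInt_le'; auto using cont_const; lra. }
   nra.
Qed.

Lemma quant_part a b Q : is_quantizer a b Q -> part a b (qn Q) (qa Q).
Proof. intros [_ [H0 [Hn Hs]]]. split; auto. Qed.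

Lemma on_cell_eq a b (x : nat -> R) n i : part a b n x -> (i < n)%nat -> a <= b ->
  forall h1 h2 : R -> R, (forall t, a <= t <= b -> h1 t = h2 t) -> RInt h1 (x i) (x (S i)) = RInt h2 (x i) (x (S i)).
Proof. intros Hp Hi Hab h1 h2 E. pose proof (part_bounds _ _ _ _ Hp i ltac:(lia)). pose proof (part_bounds _ _ _ _ Hp (S i) ltac:(lia)).
 destruct Hp as [_ [_ Hs]]. pose proof (Hs i Hi).
 apply RInt_ext. intros t Ht. rewrite Rmin_left, Rmax_right in Ht by lra. apply E; lra. Qed.


Lemma cellp_eq f a b Q i : a <= b -> is_quantizer a b Q -> (i < qn Q)%nat ->
  cellp f Q i = pr (fun x => f (clamp a b x)) (qa Q) i.
Proof. intros Hab HQ Hi. unfold cellp, pr, I. apply (on_cell_eq a b _ (qn Q)); auto using quant_part.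
 intros; rewrite clamp_id; auto. Qed.

Lemma dist_eq f a b Q : a <= b -> is_quantizer a b Q ->
  distortion f Q = Dg (qn Q) (fun x => f (clamp a b x)) (qa Q) (qc Q).
Proof. intros Hab HQ. unfold distortion, Dg. apply rsum_ext. intros i Hi. unfold I.
 apply (on_cell_eq a b _ (qn Q)); auto using quant_part. intros; rewrite clamp_id; auto. Qed.

Lemma aoi_eq f a b Q l : a <= b -> is_quantizer a b Q ->
  AoI_zw f Q l = EL2g (qn Q) (pr (fun x => f (clamp a b x)) (qa Q)) l / (2 * ELg (qn Q) (pr (fun x => f (clamp a b x)) (qa Q)) l)
     + ELg (qn Q) (pr (fun x => f (clamp a b x)) (qa Q)) l.
Proof. intros Hab HQ. unfold AoI_zw, EL, EL2, ELg, EL2g.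
 rewrite (rsum_ext _ (fun i => cellp f Q i * l i ^ 2) (fun i => pr (fun x => f (clamp a b x)) (qa Q) i * l i ^ 2))
   by (intros; rewrite (cellp_eq f a b) by auto; auto).
 rewrite (rsum_ext _ (fun i => cellp f Q i * l i) (fun i => pr (fun x => f (clamp a b x)) (qa Q) i * l i))
   by (intros; rewrite (cellp_eq f a b) by auto; auto). auto. Qed.

Lemma AoI_opt_bounds f a b Q : good (fun x => f (clamp a b x)) a b -> is_quantizer a b Q ->
  3/2 * Hbits (qn Q) (pr (fun x => f (clamp a b x)) (qa Q)) <= AoI_opt f Q /\
  forall l, is_code Q l -> AoI_opt f Q <= AoI_zw f Q l.
Proof. intros Hg HQ. pose proof Hg as [Hab [Hc [Hg0 _]]].
 set (g := fun x => f (clamp a b x)) in *.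
 set (p := pr g (qa Q)).
 assert (Hp0 : forall i, (i < qn Q)%nat -> 0 <= p i).
 { intros i Hi. pose proof (quant_part _ _ _ HQ) as Hp. pose proof (part_bounds _ _ _ _ Hp i ltac:(lia)). pose proof (part_bounds _ _ _ _ Hp (S i) ltac:(lia)).
   destruct Hp as [_ [_ Hs]]. pose proof (Hs i Hi). unfold p, pr. apply RInt_ge0; [lra|auto|intros; apply Hg0]. }
 assert (S1 : rsum (qn Q) p = 1) by (apply (sum_pr a b); auto using quant_part).
 assert (Hlb : forall z, (exists l, is_code Q l /\ z = AoI_zw f Q l) -> 3/2 * Hbits (qn Q) p <= z).
 { intros z [l [[Hl K] ->]]. rewrite (aoi_eq f a b) by (auto; lra). apply aoi_lower; auto. }
 destruct HQ as [Hn1 HQ']. pose proof (code_exists (qn Q) Hn1) as [C1 C2].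
 split.
 - eapply proj1. apply glb_bounds with (y := AoI_zw f Q (fun _ => ln (INR (qn Q)) / ln 2 + 1)); auto.
   exists (fun _ => ln (INR (qn Q)) / ln 2 + 1). split; auto. split; auto.
 - intros l Hl. eapply proj2. apply glb_bounds with (L := 3/2 * Hbits (qn Q) p); auto. exists l; auto.
Qed.

Lemma uni_qn a b d : qn (uni_quantizer a b d) = un a b d.
Proof. reflexivity. Qed.
Lemma uni_qa a b d : qa (uni_quantizer a b d) = ux a b d.
Proof. reflexivity. Qed.
Lemma uni_qc a b d : qc (uni_quantizer a b d) = umid a b d.
Proof. reflexivity. Qed.

Lemma uni_valid a b d : 0 < d -> a < b -> is_quantizer a b (uni_quantizer a b d).
Proof. intros Hd Hab. destruct (ux_part a b d Hd Hab) as [H0 [Hn Hs]].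
 destruct (ceil_spec ((b - a)/d) ltac:(apply Rdiv_lt_0_compat; lra)) as [Hn1 _].
 split; [|split; [|split]]; rewrite ?uni_qn, ?uni_qa; auto. Qed.

Lemma Klam_val d : 0 < d -> Klam (6 / d^2) = - ln d + /2.
Proof. intros Hd. unfold Klam. replace (6 / d^2 / 6) with (/ (d * d)) by (field; lra).
 rewrite ln_Rinv, ln_mult by nra. field. Qed.

Lemma phi_cont_pt y : continuity_pt phi y.
Proof. apply continuity_pt_filterlim, phi_cont. Qed.

Theorem theorem3 (f : R -> R) (a b : R) :
  pdf_on f a b -> condA f a b -> condB f a b ->
  filterlim
    (fun delta =>
       AoI_opt f (uni_quantizer a b delta)
       - AoI_best f a b (distortion f (uni_quantizer a b delta)))
    (at_right 0) (locally 0).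
Proof.
 intros Hpdf HA _.
 pose proof (good_of f a b Hpdf HA) as Hg.
 set (g := fun x => f (clamp a b x)) in *.
 pose proof Hg as [Hab [Hc [Hg0 [H1 Hpos]]]].
 destruct (g_bounded g a b ltac:(lra) Hc Hg0) as [M0 [HM0 HM0b]].
 set (M := M0 + 1).
 assert (HM : 0 < M) by (unfold M; lra).
 assert (HMb : forall x, a <= x <= b -> g x <= M) by (intros; unfold M; pose proof (HM0b x H); lra).
 pose proof ln2_pos as Hln2.
 apply filterlim_locally. intros [eps0 Heps0]. simpl.
 set (eps := eps0 * ln 2 / 24).
 assert (Heps : 0 < eps) by (unfold eps; apply Rdiv_lt_0_compat; nra).
 destruct (lower_key g a b Hg eps Heps) as [D0 [HD0 Hlow]].
 set (e' := eps / (b - a)).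
 assert (He' : 0 < e') by (unfold e'; apply Rdiv_lt_0_compat; lra).
 destruct (@Heine_cor1 phi 0 M HM (fun y _ => phi_cont_pt y) (mkposreal e' He')) as [th [_ Hth]]. simpl in Hth.
 pose proof (cond_pos th) as Hth0.
 set (w := Rmin (th / 2) (eps / (b - a))).
 assert (Hw : 0 < w) by (unfold w; apply Rmin_pos; [lra|apply Rdiv_lt_0_compat; lra]).
 assert (Hwth : w < th) by (unfold w; eapply Rle_lt_trans; [apply Rmin_l|lra]).
 assert (Hwba : w * (b - a) <= eps).
 { assert (w <= eps / (b - a)) by apply Rmin_r. apply (Rmult_le_compat_r (b - a)) in H; [|lra].
   replace (eps / (b - a) * (b - a)) with eps in H by (field; lra). auto. }
 destruct (@Heine_cor1 g a b Hab (fun x _ => Hc x) (mkposreal w Hw)) as [eta [_ Heta]]. simpl in Heta.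
 pose proof (cond_pos eta) as Heta0.
 set (V0 := (b - a + 1) * (4 + M^3)).
 assert (HV0 : 0 < V0) by (unfold V0; apply Rmult_lt_0_compat; [lra|]; pose proof (pow_lt M 3 HM); lra).
 set (Eb := exp (- (2 * V0 / (eps0 * ln 2)))).
 assert (HEb : 0 < Eb) by apply exp_pos.
 assert (HEb1 : Eb < 1).
 { unfold Eb. rewrite <- exp_0. apply exp_increasing. assert (0 < 2 * V0 / (eps0 * ln 2)) by (apply Rdiv_lt_0_compat; nra). lra. }
 set (d0 := Rmin (Rmin eta 1) (Rmin (Eb / M) (Rmin (eps / (2 + M * M)) (12 * D0 / (1 + w * (b - a)))))).
 assert (Hd0 : 0 < d0).
 { unfold d0. repeat apply Rmin_pos; try lra; apply Rdiv_lt_0_compat; nra. }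
 exists (mkposreal d0 Hd0). intros d Hd Hdpos. simpl in Hd. change (Rabs (d - 0) < d0) in Hd. rewrite Rminus_0_r in Hd.
 rewrite Rabs_right in Hd by lra.
 assert (Hd_eta : d < eta) by (eapply Rlt_le_trans; [apply Hd|]; unfold d0; eapply Rle_trans; apply Rmin_l).
 assert (Hd_1 : d < 1) by (eapply Rlt_le_trans; [apply Hd|]; unfold d0; eapply Rle_trans; [apply Rmin_l|apply Rmin_r]).
 assert (Hd_Eb : d < Eb / M) by (eapply Rlt_le_trans; [apply Hd|]; unfold d0; eapply Rle_trans; [apply Rmin_r|apply Rmin_l]).
 assert (Hd_e : d < eps / (2 + M * M)) by (eapply Rlt_le_trans; [apply Hd|]; unfold d0; eapply Rle_trans; [apply Rmin_r|]; eapply Rle_trans; [apply Rmin_r|apply Rmin_l]).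
 assert (Hd_D : d < 12 * D0 / (1 + w * (b - a))) by (eapply Rlt_le_trans; [apply Hd|]; unfold d0; eapply Rle_trans; [apply Rmin_r|]; eapply Rle_trans; [apply Rmin_r|apply Rmin_r]).
 clear Hd.
 rename d into delta. rename Hdpos into Hdelta.
 set (U := uni_quantizer a b delta).
 assert (HU : is_quantizer a b U) by (apply uni_valid; auto).
 set (HnU := Hn (un a b delta) g (ux a b delta)).
 assert (HnU_up : HnU <= Phi g a b - ln delta + 2 * eps).
 { pose proof (Hn_upper g a b delta w eta M th e' Hg Hdelta Hd_eta ltac:(lra) ltac:(intros; apply Heta; auto) HMb Hwth
      ltac:(intros; apply Hth; auto)) as HU1.
   fold HnU in HU1. assert (e' * (b - a) = eps) by (unfold e'; field; lra).
   assert ((2 + M * M) * delta <= eps).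
   { assert (0 < 2 + M * M) by nra. apply (Rmult_lt_compat_l (2 + M * M)) in Hd_e; auto.
     replace ((2 + M * M) * (eps / (2 + M * M))) with eps in Hd_e by (field; lra). lra. }
   lra. }
 set (DU := distortion f U).
 assert (HDU : DU <= (1 + w * (b - a)) * delta^2 / 12).
 { unfold DU. rewrite (dist_eq f a b) by (first [lra | auto]). unfold U. rewrite uni_qn, uni_qa, uni_qc.
   apply udist_bound with (eta := eta); auto. }
 assert (HDU0 : DU <= D0).
 { eapply Rle_trans; [apply HDU|]. assert (0 < 1 + w * (b - a)) by nra.
   assert (delta^2 <= delta) by (simpl; nra).
   assert ((1 + w * (b - a)) * delta <= 12 * D0).
   { apply (Rmult_lt_compat_l (1 + w * (b - a))) in Hd_D; auto.
     replace ((1 + w * (b - a)) * (12 * D0 / (1 + w * (b - a)))) with (12 * D0) in Hd_D by (field; lra). lra. }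
   assert ((1 + w * (b - a)) * delta^2 <= (1 + w * (b - a)) * delta) by (apply Rmult_le_compat_l; lra).
   lra. }
 assert (HlamDU : 6 / delta^2 * DU <= /2 + eps / 2).
 { assert (0 < delta^2) by (simpl; nra).
   assert (W6 : 6 / delta^2 * DU <= 6 / delta^2 * ((1 + w * (b - a)) * delta^2 / 12)).
   { apply Rmult_le_compat_l; auto. apply Rdiv_le_0_compat; lra. }
   replace (6 / delta^2 * ((1 + w * (b - a)) * delta^2 / 12)) with (/2 + w * (b - a) / 2) in W6 by (field; lra).
   lra. }
 set (Lb := 3/2 * ((HnU - 4 * eps) / ln 2)).
 assert (HQlow : forall z, (exists Q, is_quantizer a b Q /\ distortion f Q <= DU /\ z = AoI_opt f Q) -> Lb <= z).
 { intros z [Q [HQ [HDQ ->]]].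
   destruct (AoI_opt_bounds f a b Q Hg HQ) as [B1 _]. fold g in B1.
   rewrite Hbits_nat in B1.
   rewrite (dist_eq f a b Q) in HDQ by (first [lra | auto]). fold g in HDQ.
   assert (HDQ0 : Dg (qn Q) g (qa Q) (qc Q) <= D0) by lra.
   assert (Hlam : 0 < 6 / delta^2) by (apply Rdiv_lt_0_compat; [lra|simpl; nra]).
   pose proof (Hlow (6 / delta^2) (qn Q) (qa Q) (qc Q) Hlam (quant_part _ _ _ HQ) HDQ0) as L.
   rewrite Klam_val in L by auto.
   assert (6 / delta^2 * Dg (qn Q) g (qa Q) (qc Q) <= 6 / delta^2 * DU) by (apply Rmult_le_compat_l; lra).
   change (Hnat (qn Q) (pr g (qa Q))) with (Hn (qn Q) g (qa Q)) in B1.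
   assert (HnU - 4 * eps <= Hn (qn Q) g (qa Q)) by lra.
   unfold Lb. eapply Rle_trans; [|apply B1]. apply Rmult_le_compat_l; [lra|]. unfold Rdiv. apply Rmult_le_compat_r; [apply Rlt_le, Rinv_0_lt_compat; lra|lra]. }
 assert (HUmem : exists Q, is_quantizer a b Q /\ distortion f Q <= DU /\ AoI_opt f U = AoI_opt f Q).
 { exists U. split; auto. split; [unfold DU; lra|auto]. }
 destruct (glb_bounds _ Lb (AoI_opt f U) HUmem HQlow) as [G1 G2].
 fold DU. unfold AoI_best. set (Best := real _) in *.
 (* upper bound on AoI of the uniform quantizer via the Shannon code *)
 set (p := pr g (ux a b delta)).
 assert (Hp : forall i, (i < un a b delta)%nat -> 0 < p i < 1).
 { intros i Hi. destruct (upr_bounds g a b delta M i Hg Hdelta HMb Hi) as [P1 P2]. split; auto.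
   assert (M * delta < Eb). { apply (Rmult_lt_compat_l M) in Hd_Eb; auto. replace (M * (Eb / M)) with Eb in Hd_Eb by (field; lra). auto. }
   fold p in P2. lra. }
 assert (S1 : rsum (un a b delta) p = 1) by (apply (sum_pr a b); auto; apply ux_part; auto).
 assert (HnU_low : - ln (M * delta) <= HnU) by (apply Hn_lower; auto).
 assert (HMd : M * delta < Eb). { apply (Rmult_lt_compat_l M) in Hd_Eb; auto. replace (M * (Eb / M)) with Eb in Hd_Eb by (field; lra). auto. }
 assert (HlnMd : ln (M * delta) < - (2 * V0 / (eps0 * ln 2))).
 { unfold Eb in HMd. rewrite <- (ln_exp (- (2 * V0 / (eps0 * ln 2)))). apply ln_increasing; auto. apply Rmult_lt_0_compat; auto. }
 assert (HnUpos : 2 * V0 / (eps0 * ln 2) < HnU) by lra.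
 assert (HnUpos' : 0 < HnU). { assert (0 < 2 * V0 / (eps0 * ln 2)) by (apply Rdiv_lt_0_compat; nra). lra. }
 set (V := (b - a + delta) * (4 + M^3)).
 assert (HV : rsum (un a b delta) (fun i => p i * (ln (p i) - ln delta)^2) <= V) by (apply Hvar; auto).
 assert (HVV0 : V <= V0). { unfold V, V0. apply Rmult_le_compat_r; [pose proof (pow_lt M 3 HM); lra|lra]. }
 destruct (aoi_upper (un a b delta) p (ln delta) V Hp S1 HV HnUpos') as [C1 [C2 C3]].
 set (l := fun i => - log2 (p i)) in *.
 assert (Hcode : is_code U l) by (split; unfold U; rewrite uni_qn; auto).
 destruct (AoI_opt_bounds f a b U Hg HU) as [_ B2].
 specialize (B2 l Hcode).
 rewrite (aoi_eq f a b U l) in B2 by (first [lra | auto]). fold g in B2. unfold U in B2. rewrite uni_qn, uni_qa in B2. fold p in B2.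
 change (Hnat (un a b delta) p) with HnU in C3.
 assert (HVterm : V / (2 * HnU * ln 2) <= eps0 / 4).
 { apply (Rmult_le_reg_r (2 * HnU * ln 2)); [nra|].
   replace (V / (2 * HnU * ln 2) * (2 * HnU * ln 2)) with V by (field; split; lra).
   assert (2 * V0 / (eps0 * ln 2) * (eps0 * ln 2) = 2 * V0) by (field; split; lra).
   assert (2 * V0 / (eps0 * ln 2) * (eps0 * ln 2) <= HnU * (eps0 * ln 2)) by (apply Rmult_le_compat_r; nra).
   nra. }
 apply ball_R. rewrite Rminus_0_r.
 assert (F0 : 0 <= AoI_opt f U - Best) by lra.
 rewrite Rabs_right by lra.
 fold U in B2.
 assert (W7 : AoI_opt f U - Best <= 3/2 * (HnU / ln 2) + V / (2 * HnU * ln 2) - Lb) by lra.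
 unfold Lb in W7. replace (3/2 * (HnU / ln 2) + V / (2 * HnU * ln 2) - 3/2 * ((HnU - 4 * eps) / ln 2)) with (6 * eps / ln 2 + V / (2 * HnU * ln 2)) in W7 by (field; lra).
 assert (6 * eps / ln 2 = eps0 / 4) by (unfold eps; field; lra).
 lra.
Qed.
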